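(* The operators $L=A^*A$, $R=B^*B$, $C=(AB)^3$ are invertible, symmetric and grading-preserving, and satisfy $ACA=BCB=C^{-1}$, $LCL^{-1}=RCR^{-1}=C$, $ALA=L^{-1}$, $BRB=R^{-1}$, $ARA=L^{-1}RC^{-1}$, $BLB=R^{-1}LC$.
   Context: Let $\mathcal C$ be a strict monoidal category with tensor product $\boxtimes$ and unit object $\mathbb I$ which is an Ab-category (all Hom-sets are abelian groups, composition and $\boxtimes$ are biadditive) whose ground ring $\mathsf k=\operatorname{End}(\mathbb I)$ is a field; each $\operatorname{Hom}(V,W)$ is a $\mathsf k$-vector space via $kf=k\boxtimes f$, and $\boxtimes$ is $\mathsf k$-bilinear on morphisms. An object $V$ is simple if $\operatorname{End}(V)=\mathsf k\,\mathrm{Id}_V$; for such $V$ and $f\in\operatorname{End}(V)$, $\langle f\rangle\in\mathsf k$ denotes the scalar with $f=\langle f\rangle\mathrm{Id}_V$. For objects $V_i$ write $H^{ij}_k=\operatorname{Hom}(V_k,V_i\boxtimes V_j)$ and $H^k_{ij}=\operatorname{Hom}(V_i\boxtimes V_j,V_k)$. A $\Psi$-system in $\mathcal C$ consists of (1) a family of simple objects $\{V_i\}_{i\in I}$ with $\operatorname{Hom}(V_i,V_j)=0$ for $i\neq j$; (2) an involution $i\mapsto i^*$ of $I$; (3) morphisms $b_i:\mathbb I\to V_i\boxtimes V_{i^*}$, $d_i:V_i\boxtimes V_{i^*}\to\mathbb I$ ($i\in I$) with $(\mathrm{Id}_{V_i}\boxtimes d_{i^*})(b_i\boxtimes\mathrm{Id}_{V_i})=\mathrm{Id}_{V_i}$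 and $(d_i\boxtimes\mathrm{Id}_{V_i})(\mathrm{Id}_{V_i}\boxtimes b_{i^*})=\mathrm{Id}_{V_i}$; (4) for all $i,j\in I$ such that $H^{ij}_k\neq0$ for some $k\in I$, the morphism $\mathrm{Id}_{V_i\boxtimes V_j}$ lies in the image of the linear map $\bigoplus_{k\in I}H^{ij}_k\otimes_{\mathsf k}H^k_{ij}\to\operatorname{End}(V_i\boxtimes V_j)$, $x\otimes y\mapsto x\circ y$. Fix a $\Psi$-system in $\mathcal C$. Let $\hat H=\bigoplus_{i,j,k\in I}H^k_{ij}$, $\check H=\bigoplus_{i,j,k\in I}H^{ij}_k$, $H=\hat H\oplus\check H$, and let $\pi^k_{ij}:H\to H^k_{ij}$, $\pi^{ij}_k:H\to H^{ij}_k$ be the projections. Define $A,B\in\operatorname{End}_{\mathsf k}(H)$ by $Ax=\sum_{i,j,k\in I}\big((\mathrm{Id}_{V_{i^*}}\boxtimes\pi^k_{ij}x)(b_{i^*}\boxtimes\mathrm{Id}_{V_j})+(d_{i^*}\boxtimes\mathrm{Id}_{V_j})(\mathrm{Id}_{V_{i^*}}\boxtimes\pi^{ij}_kx)\big)$, $Bx=\sum_{i,j,k\in I}\big((\pi^k_{ij}x\boxtimes\mathrm{Id}_{V_{j^*}})(\mathrm{Id}_{V_i}\boxtimes b_j)+(\mathrm{Id}_{V_i}\boxtimes d_j)(\pi^{ij}_kx\boxtimes\mathrm{Id}_{V_{j^*}})\big)$. Define the symmetric bilinear form on $H$: $\langle x,y\rangle=\sum_{i,j,k\in I}\big(\langle\pi^k_{ij}x\circ\pi^{ij}_ky\rangle+\langle\pi^k_{ij}y\circ\pi^{ij}_kx\rangle\big)$.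 A transpose of $f\in\operatorname{End}(H)$ is the (unique) $f^*\in\operatorname{End}(H)$ with $\langle fx,y\rangle=\langle x,f^*y\rangle$ for all $x,y\in H$; $A^*$, $B^*$ denote the transposes of $A$, $B$ (which exist). An operator $f$ is symmetric if $f^*=f$, and grading-preserving if $f(H^{ij}_k)\subset H^{ij}_k$ and $f(H^k_{ij})\subset H^k_{ij}$ for all $i,j,k\in I$. *)

(* Defs.v *)
From HB Require Import structures.
From mathcomp Require Import all_boot all_algebra.
From Stdlib Require Import ClassicalEpsilon.
Set Implicit Arguments.
Unset Strict Implicit.
Unset Printing Implicit Defensive.
Import GRing.Theory.
Local Open Scope ring_scope.

Definition castH {O : Type} (H : O -> O -> Type) {U U' W W' : O}
  (e1 : U = U') (e2 : W = W') (f : H U W) : H U' W' :=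
  match e2 in _ = W1 return H U' W1 with
  | erefl => match e1 in _ = U1 return H U1 W with erefl => f end end.

Record smcat_data (k : fieldType) := SMData {
  Ob : Type;
  Hom : Ob -> Ob -> lmodType k;
  comp : forall U W X : Ob, Hom W X -> Hom U W -> Hom U X;
  idm : forall U : Ob, Hom U U;
  tens : Ob -> Ob -> Ob;
  unitO : Ob;
  tensm : forall U W U' W' : Ob, Hom U U' -> Hom W W' -> Hom (tens U W) (tens U' W');
  tensA : forall U W X : Ob, tens (tens U W) X = tens U (tens W X);
  tens1U : forall U : Ob, tens unitO U = U;
  tensU1 : forall U : Ob, tens U unitO = U }.

Arguments Ob {k} s : rename.
Arguments Hom {k} D U W : rename.
Arguments comp {k D U W X} : rename.
Arguments idm {k D} : rename.
Arguments tens {k D} : rename.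
Arguments unitO {k} : rename.
Arguments tensm {k D U W U' W'} : rename.
Arguments tensA {k D} : rename.
Arguments tens1U {k D} : rename.
Arguments tensU1 {k D} : rename.

Definition castm {k : fieldType} (D : smcat_data k) {U U' W W' : Ob D}
  (e1 : U = U') (e2 : W = W') (f : Hom D U W) : Hom D U' W' :=
  @castH (Ob D) (fun X Y => (Hom D X Y : Type)) U U' W W' e1 e2 f.
Arguments castm {k} D {U U' W W'}.

Definition compc {k : fieldType} {D : smcat_data k} {U W1 W2 X : Ob D}
  (e : W1 = W2) (g : Hom D W2 X) (f : Hom D U W1) : Hom D U X :=
  comp g (castm D erefl e f).

Record smcat_axioms (k : fieldType) (D : smcat_data k) : Prop := {
  compA : forall (U W X Y : Ob D) (h : Hom D X Y) (g : Hom D W X) (f : Hom D U W),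
    comp h (comp g f) = comp (comp h g) f;
  comp1m : forall (U W : Ob D) (f : Hom D U W), comp (idm W) f = f;
  compm1 : forall (U W : Ob D) (f : Hom D U W), comp f (idm U) = f;
  compDl : forall (U W X : Ob D) (g g' : Hom D W X) (f : Hom D U W),
    comp (g + g') f = comp g f + comp g' f;
  compDr : forall (U W X : Ob D) (g : Hom D W X) (f f' : Hom D U W),
    comp g (f + f') = comp g f + comp g f';
  compZl : forall (U W X : Ob D) (c : k) (g : Hom D W X) (f : Hom D U W),
    comp (c *: g) f = c *: comp g f;
  compZr : forall (U W X : Ob D) (c : k) (g : Hom D W X) (f : Hom D U W),
    comp g (c *: f) = c *: comp g f;
  tensm_comp : forall (U W X U' W' X' : Ob D) (f : Hom D W X) (g : Hom D U W)
      (f' : Hom D W' X') (g' : Hom D U' W'),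
    tensm (comp f g) (comp f' g') = comp (tensm f f') (tensm g g');
  tensm_id : forall U W : Ob D, tensm (idm U) (idm W) = idm (tens U W);
  tensmA : forall (U W X U' W' X' : Ob D) (f : Hom D U U') (g : Hom D W W') (h : Hom D X X'),
    castm D (tensA U W X) (tensA U' W' X') (tensm (tensm f g) h) = tensm f (tensm g h);
  tensm1l : forall (U W : Ob D) (f : Hom D U W),
    castm D (tens1U U) (tens1U W) (tensm (idm (unitO D)) f) = f;
  tensm1r : forall (U W : Ob D) (f : Hom D U W),
    castm D (tensU1 U) (tensU1 W) (tensm f (idm (unitO D))) = f;
  tensmDl : forall (U W U' W' : Ob D) (f f' : Hom D U U') (g : Hom D W W'),
    tensm (f + f') g = tensm f g + tensm f' g;
  tensmDr : forall (U W U' W' : Ob D) (f : Hom D U U') (g g' : Hom D W W'),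
    tensm f (g + g') = tensm f g + tensm f g';
  tensmZl : forall (U W U' W' : Ob D) (c : k) (f : Hom D U U') (g : Hom D W W'),
    tensm (c *: f) g = c *: tensm f g;
  tensmZr : forall (U W U' W' : Ob D) (c : k) (f : Hom D U U') (g : Hom D W W'),
    tensm f (c *: g) = c *: tensm f g;
  scale_tens : forall (U W : Ob D) (c : k) (f : Hom D U W),
    c *: f = castm D (tens1U U) (tens1U W) (tensm (c *: idm (unitO D)) f);
  end_unit : forall f : Hom D (unitO D) (unitO D), exists c : k, f = c *: idm (unitO D);
  idm_unit_neq0 : idm (unitO D) != 0 }.

Record psi_data (k : fieldType) (D : smcat_data k) (I : choiceType) := PsiData {
  Vo : I -> Ob D;
  star : I -> I;
  star_invol : forall i, star (star i) = i;
  bv : forall i, Hom D (unitO D) (tens (Vo i) (Vo (star i)));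
  dv : forall i, Hom D (tens (Vo i) (Vo (star i))) (unitO D) }.

Arguments Vo {k D I}.
Arguments star {k D I}.
Arguments star_invol {k D I}.
Arguments bv {k D I}.
Arguments dv {k D I}.

Section Psi.
Variables (k : fieldType) (D : smcat_data k) (I : choiceType) (P : psi_data D I).

Local Notation V := (Vo P).
Local Notation "i ^*" := (star P i).

(* H^k_{ij} = Hom(V_i (x) V_j, V_k) and H^{ij}_k = Hom(V_k, V_i (x) V_j) *)
Definition Hh (i j l : I) := Hom D (tens (V i) (V j)) (V l).
Definition Hc (i j l : I) := Hom D (V l) (tens (V i) (V j)).

Definition eZ (i : I) : tens (tens (V i) (V i^*)) (V i) = tens (V i) (tens (V i^*) (V (i^*)^*)) :=
  etrans (tensA _ _ _) (f_equal (fun X => tens (V i) (tens (V i^*) (V X))) (esym (star_invol P i))).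

Definition zig (i : I) : Hom D (V i) (V i) :=
  castm D (tens1U (V i)) (tensU1 (V i))
    (compc (eZ i) (tensm (idm (V i)) (dv P i^*)) (tensm (bv P i) (idm (V i)))).

Definition zag (i : I) : Hom D (V i) (V i) :=
  castm D (tensU1 (V i)) (tens1U (V i))
    (compc (esym (eZ i)) (tensm (dv P i) (idm (V i))) (tensm (idm (V i)) (bv P i^*))).

Record is_psi_system : Prop := {
  psi_simple : forall (i : I) (f : Hom D (V i) (V i)), exists c : k, f = c *: idm (V i);
  psi_simple_neq0 : forall i : I, idm (V i) != 0;
  psi_disj : forall i j : I, i != j -> forall f : Hom D (V i) (V j), f = 0;
  psi_zig : forall i : I, zig i = idm (V i);
  psi_zag : forall i : I, zag i = idm (V i);
  psi_dom : forall i j : I, (exists l : I, exists x : Hc i j l, x != 0) ->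
    exists s : seq {l : I & (Hc i j l * Hh i j l)%type},
      idm (tens (V i) (V j)) = \sum_(p <- s) comp (projT2 p).1 (projT2 p).2 }.

Lemma simple_exb (HP : is_psi_system) (i : I) (f : Hom D (V i) (V i)) :
  exists c : k, f == c *: idm (V i).
Proof. by have [c ->] := psi_simple HP f; exists c. Qed.

Definition scal (HP : is_psi_system) (i : I) (f : Hom D (V i) (V i)) : k :=
  xchoose (simple_exb HP f).

(* H = (+)_{ijk} H^k_{ij} (+) (+)_{ijk} H^{ij}_k : finitely supported families *)
Record Hsp := MkH {
  xh : forall i j l : I, Hh i j l;
  xc : forall i j l : I, Hc i j l;
  xfin : exists s : seq I, forall i j l : I, ~~ [&& i \in s, j \in s & l \in s] ->
    xh i j l = 0 /\ xc i j l = 0 }.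

Definition supp (x : Hsp) : seq I :=
  proj1_sig (constructive_indefinite_description _ (xfin x)).

(* the bilinear form <x,y>; the sum over all i,j,k reduces to the finite support of x *)
Definition form (HP : is_psi_system) (x y : Hsp) : k :=
  let s := undup (supp x) in
  \sum_(i <- s) \sum_(j <- s) \sum_(l <- s)
     (scal HP (comp (xh x i j l) (xc y i j l)) + scal HP (comp (xh y i j l) (xc x i j l))).

Definition is_transpose (HP : is_psi_system) (f g : Hsp -> Hsp) : Prop :=
  forall x y : Hsp, form HP (f x) y = form HP x (g y).

Definition in_Hh (i j l : I) (x : Hsp) : Prop :=
  (forall i' j' l', (i', j', l') != (i, j, l) -> xh x i' j' l' = 0) /\
  (forall i' j' l', xc x i' j' l' = 0).
Definition in_Hc (i j l : I) (x : Hsp) : Prop :=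
  (forall i' j' l', xh x i' j' l' = 0) /\
  (forall i' j' l', (i', j', l') != (i, j, l) -> xc x i' j' l' = 0).

Definition grading_preserving (f : Hsp -> Hsp) : Prop :=
  forall (i j l : I) (x : Hsp),
    (in_Hh i j l x -> in_Hh i j l (f x)) /\ (in_Hc i j l x -> in_Hc i j l (f x)).

Definition cHh1 {a a' : I} (e : a = a') (b c : I) (t : Hh a b c) : Hh a' b c :=
  match e in _ = a1 return Hh a1 b c with erefl => t end.
Definition cHc1 {a a' : I} (e : a = a') (b c : I) (t : Hc a b c) : Hc a' b c :=
  match e in _ = a1 return Hc a1 b c with erefl => t end.
Definition cHh2 {b b' : I} (e : b = b') (a c : I) (t : Hh a b c) : Hh a b' c :=
  match e in _ = b1 return Hh a b1 c with erefl => t end.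
Definition cHc2 {b b' : I} (e : b = b') (a c : I) (t : Hc a b c) : Hc a b' c :=
  match e in _ = b1 return Hc a b1 c with erefl => t end.

Definition eA (i j : I) :
  tens (tens (V i^*) (V (i^*)^*)) (V j) = tens (V i^*) (tens (V i) (V j)) :=
  etrans (tensA _ _ _) (f_equal (fun X => tens (V i^*) (tens (V X) (V j))) (star_invol P i)).

(* A on H^k_{ij}: y |-> (Id_{V_i^*} (x) y)(b_{i^*} (x) Id_{V_j}) in H^{i^* k}_j *)
Definition TA_h (i j l : I) (y : Hh i j l) : Hc i^* l j :=
  castm D (tens1U (V j)) erefl
    (compc (eA i j) (tensm (idm (V i^*)) y) (tensm (bv P i^*) (idm (V j)))).
(* A on H^{ij}_k: y |-> (d_{i^*} (x) Id_{V_j})(Id_{V_i^*} (x) y) in H^j_{i^* k} *)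
Definition TA_c (i j l : I) (y : Hc i j l) : Hh i^* l j :=
  castm D erefl (tens1U (V j))
    (compc (esym (eA i j)) (tensm (dv P i^*) (idm (V j))) (tensm (idm (V i^*)) y)).
(* B on H^k_{ij}: y |-> (y (x) Id_{V_j^*})(Id_{V_i} (x) b_j) in H^{k j^*}_i *)
Definition TB_h (i j l : I) (y : Hh i j l) : Hc l j^* i :=
  castm D (tensU1 (V i)) erefl
    (compc (esym (tensA (V i) (V j) (V j^*))) (tensm y (idm (V j^*))) (tensm (idm (V i)) (bv P j))).
(* B on H^{ij}_k: y |-> (Id_{V_i} (x) d_j)(y (x) Id_{V_j^*}) in H^i_{k j^*} *)
Definition TB_c (i j l : I) (y : Hc i j l) : Hh l j^* i :=
  castm D erefl (tensU1 (V i))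
    (compc (tensA (V i) (V j) (V j^*)) (tensm (idm (V i)) (dv P j)) (tensm y (idm (V j^*)))).

(* components of Ax and Bx (each component receives exactly one term of the sum) *)
Definition ahA (x : Hsp) (a b c : I) : Hh a b c :=
  cHh1 (star_invol P a) (TA_c (xc x a^* c b)).
Definition acA (x : Hsp) (a b c : I) : Hc a b c :=
  cHc1 (star_invol P a) (TA_h (xh x a^* c b)).
Definition ahB (x : Hsp) (a b c : I) : Hh a b c :=
  cHh2 (star_invol P b) (TB_c (xc x c b^* a)).
Definition acB (x : Hsp) (a b c : I) : Hc a b c :=
  cHc2 (star_invol P b) (TB_h (xh x c b^* a)).

Variable HC : smcat_axioms D.

Lemma castm0 (U U' W W' : Ob D) (e1 : U = U') (e2 : W = W') :
  castm D e1 e2 (0 : Hom D U W) = 0.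
Proof. by case: W' / e2; case: U' / e1. Qed.

Lemma comp0l (U W X : Ob D) (f : Hom D U W) : comp (0 : Hom D W X) f = 0.
Proof. by rewrite -(scale0r (0 : Hom D W X)) (compZl HC) scale0r. Qed.

Lemma comp0r (U W X : Ob D) (g : Hom D W X) : comp g (0 : Hom D U W) = 0.
Proof. by rewrite -(scale0r (0 : Hom D U W)) (compZr HC) scale0r. Qed.

Lemma tensm0l (U W U' W' : Ob D) (g : Hom D W W') : tensm (0 : Hom D U U') g = 0.
Proof. by rewrite -(scale0r (0 : Hom D U U')) (tensmZl HC) scale0r. Qed.

Lemma tensm0r (U W U' W' : Ob D) (f : Hom D U U') : tensm f (0 : Hom D W W') = 0.
Proof. by rewrite -(scale0r (0 : Hom D W W')) (tensmZr HC) scale0r. Qed.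

Lemma compc0 (U W1 W2 X : Ob D) (e : W1 = W2) (g : Hom D W2 X) :
  compc e g (0 : Hom D U W1) = 0.
Proof. by rewrite /compc castm0 comp0r. Qed.

Lemma compc0l (U W1 W2 X : Ob D) (e : W1 = W2) (f : Hom D U W1) :
  compc e (0 : Hom D W2 X) f = 0.
Proof. by rewrite /compc comp0l. Qed.

Lemma TA_h0 i j l : TA_h (0 : Hh i j l) = 0.
Proof. by rewrite /TA_h tensm0r compc0l castm0. Qed.
Lemma TA_c0 i j l : TA_c (0 : Hc i j l) = 0.
Proof. by rewrite /TA_c tensm0r compc0 castm0. Qed.
Lemma TB_h0 i j l : TB_h (0 : Hh i j l) = 0.
Proof. by rewrite /TB_h tensm0l compc0l castm0. Qed.
Lemma TB_c0 i j l : TB_c (0 : Hc i j l) = 0.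
Proof. by rewrite /TB_c tensm0l compc0 castm0. Qed.

Lemma cHh1_0 (a a' : I) (e : a = a') b c : cHh1 e (0 : Hh a b c) = 0.
Proof. by case: a' / e. Qed.
Lemma cHc1_0 (a a' : I) (e : a = a') b c : cHc1 e (0 : Hc a b c) = 0.
Proof. by case: a' / e. Qed.
Lemma cHh2_0 (b b' : I) (e : b = b') a c : cHh2 e (0 : Hh a b c) = 0.
Proof. by case: b' / e. Qed.
Lemma cHc2_0 (b b' : I) (e : b = b') a c : cHc2 e (0 : Hc a b c) = 0.
Proof. by case: b' / e. Qed.

Lemma opA_fin (x : Hsp) : exists s : seq I, forall a b c : I,
  ~~ [&& a \in s, b \in s & c \in s] -> ahA x a b c = 0 /\ acA x a b c = 0.
Proof.
case: (xfin x) => s hs; exists (s ++ map (star P) s) => a b c hn.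
have [h1 h2] : xh x a^* c b = 0 /\ xc x a^* c b = 0.
  apply: hs; apply: contra hn => /and3P [sa sc sb].
  rewrite !mem_cat sb sc !orTb !andbT orbC.
  by apply/orP; left; apply/mapP; exists a^* => //; rewrite star_invol.
rewrite /ahA /acA h1 h2 TA_c0 TA_h0.
by rewrite cHh1_0 cHc1_0.
Qed.

Lemma opB_fin (x : Hsp) : exists s : seq I, forall a b c : I,
  ~~ [&& a \in s, b \in s & c \in s] -> ahB x a b c = 0 /\ acB x a b c = 0.
Proof.
case: (xfin x) => s hs; exists (s ++ map (star P) s) => a b c hn.
have [h1 h2] : xh x c b^* a = 0 /\ xc x c b^* a = 0.
  apply: hs; apply: contra hn => /and3P [sc sb sa].
  rewrite !mem_cat sa sc !orTb !andbT /= orbC.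
  by apply/orP; left; apply/mapP; exists b^* => //; rewrite star_invol.
rewrite /ahB /acB h1 h2 TB_c0 TB_h0.
by rewrite cHh2_0 cHc2_0.
Qed.

Definition opA (x : Hsp) : Hsp := @MkH (ahA x) (acA x) (opA_fin x).
Definition opB (x : Hsp) : Hsp := @MkH (ahB x) (acB x) (opB_fin x).

End Psi.

(* Main.v *)
Require Import Defs.
From HB Require Import structures.
From mathcomp Require Import all_boot all_algebra.
From Stdlib Require Import ProofIrrelevance ClassicalEpsilon Eqdep FunctionalExtensionality Classical.
Set Implicit Arguments.
Unset Strict Implicit.
Unset Printing Implicit Defensive.
Import GRing.Theory.
Local Open Scope ring_scope.

Ltac pg := match goal with |- ?g => idtac g end.


Section Packed.
Variables (k : fieldType) (D : smcat_data k) (HC : smcat_axioms D).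

Definition PH := {p : Ob D * Ob D & Defs.Hom D p.1 p.2}.
Definition pk {U W : Ob D} (f : Defs.Hom D U W) : PH := existT (fun p => Defs.Hom D p.1 p.2) (U, W) f.
Definition src (F : PH) := (projT1 F).1.
Definition tgt (F : PH) := (projT1 F).2.
Definition pcomp (F G : PH) : PH :=
  existT (fun p => Defs.Hom D p.1 p.2) (src G, tgt F)
   (match excluded_middle_informative (tgt G = src F) with
    | left e => Defs.comp (projT2 F) (castm D erefl e (projT2 G))
    | right _ => 0 end).
Definition ptens (F G : PH) : PH := pk (tensm (projT2 F) (projT2 G)).
Definition pid (X : Ob D) : PH := pk (idm X).
Definition psc (c : k) (F : PH) : PH := pk (c *: projT2 F).

Lemma ptens_pk (U W U' W' : Ob D) (f : Defs.Hom D U W) (g : Defs.Hom D U' W') :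
  ptens (pk f) (pk g) = pk (tensm f g).
Proof. by []. Qed.

Lemma PH_eta (F : PH) : F = pk (projT2 F).
Proof. by case: F => [[U W] f]. Qed.

Lemma pk_castm (U U' W W' : Ob D) (e1 : U = U') (e2 : W = W') (f : Defs.Hom D U W) :
  pk (castm D e1 e2 f) = pk f.
Proof. by case: W' / e2; case: U' / e1. Qed.

Lemma pk_inj (U W : Ob D) (f g : Defs.Hom D U W) : pk f = pk g -> f = g.
Proof. exact: inj_pairT2. Qed.

Lemma pcomp_pk (U W X : Ob D) (g : Defs.Hom D W X) (f : Defs.Hom D U W) :
  pcomp (pk g) (pk f) = pk (Defs.comp g f).
Proof.
rewrite /pcomp /=; case: excluded_middle_informative => [e|[]] //.
by rewrite (proof_irrelevance _ e erefl).
Qed.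

Lemma pk_compc (U W1 W2 X : Ob D) (e : W1 = W2) (g : Defs.Hom D W2 X) (f : Defs.Hom D U W1) :
  pk (compc e g f) = pcomp (pk g) (pk f).
Proof. by rewrite /compc -(pk_castm erefl e f) pcomp_pk. Qed.

Lemma pcomp_ne (F G : PH) : ~ (tgt G = src F) ->
  pcomp F G = pk (0 : Defs.Hom D (src G) (tgt F)).
Proof. by rewrite /pcomp; case: excluded_middle_informative. Qed.

Lemma pcomp_0l (U X : Ob D) (G : PH) :
  pcomp (pk (0 : Defs.Hom D U X)) G = pk (0 : Defs.Hom D (src G) X).
Proof.
rewrite /pcomp; case: excluded_middle_informative => // e.
by rewrite /= (comp0l HC).
Qed.

Lemma pcomp_0r (Y W : Ob D) (F : PH) :
  pcomp F (pk (0 : Defs.Hom D Y W)) = pk (0 : Defs.Hom D Y (tgt F)).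
Proof.
rewrite /pcomp; case: excluded_middle_informative => //= e.
by rewrite castm0 (comp0r HC).
Qed.

Lemma pcompA (F G H : PH) : pcomp (pcomp F G) H = pcomp F (pcomp G H).
Proof.
rewrite [F]PH_eta [G]PH_eta [H]PH_eta.
move: (projT2 F) (projT2 G) (projT2 H).
case: F G H => [[U1 W1] _] [[U2 W2] _] [[U3 W3] _] /= f g h.
have [e2|ne2] := excluded_middle_informative (W2 = U1); last first.
  rewrite (@pcomp_ne (pk f) (pk g)) // pcomp_0l /=.
  by rewrite (@pcomp_ne (pk f)) //.
subst.
have [e1|ne1] := excluded_middle_informative (W3 = U2); last first.
  rewrite pcomp_pk (@pcomp_ne _ (pk h)) // (@pcomp_ne (pk g) (pk h)) //.
  by rewrite pcomp_0r.
by subst; rewrite !pcomp_pk (Defs.compA HC).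
Qed.

Lemma pcomp1l (F : PH) : pcomp (pid (tgt F)) F = F.
Proof. by rewrite [F]PH_eta /pid pcomp_pk (comp1m HC). Qed.
Lemma pcomp1r (F : PH) : pcomp F (pid (src F)) = F.
Proof. by rewrite [F]PH_eta /pid pcomp_pk (compm1 HC). Qed.

Lemma pinter (F G F' G' : PH) : tgt G = src F -> tgt G' = src F' ->
  ptens (pcomp F G) (pcomp F' G') = pcomp (ptens F F') (ptens G G').
Proof.
case: F G F' G' => [[U1 W1] f] [[U2 W2] g] [[U3 W3] f'] [[U4 W4] g'].
rewrite /tgt /src /= => e e'.
move: f g f' g'; rewrite /= => f g f' g'.
subst.
change (ptens (pcomp (pk f) (pk g)) (pcomp (pk f') (pk g')) =
   pcomp (ptens (pk f) (pk f')) (ptens (pk g) (pk g'))).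
by rewrite !pcomp_pk ?ptens_pk (tensm_comp HC).
Qed.

Lemma ptensA (F G H : PH) : ptens (ptens F G) H = ptens F (ptens G H).
Proof.
case: F G H => [[U1 W1] f] [[U2 W2] g] [[U3 W3] h].
change (ptens (ptens (pk f) (pk g)) (pk h) = ptens (pk f) (ptens (pk g) (pk h))).
by rewrite !ptens_pk -(tensmA HC) pk_castm.
Qed.

Lemma ptens1l (F : PH) : ptens (pid (unitO D)) F = F.
Proof.
case: F => [[U W] f]; change (ptens (pid (unitO D)) (pk f) = pk f).
by rewrite /pid ptens_pk -{2}(tensm1l HC f) pk_castm.
Qed.
Lemma ptens1r (F : PH) : ptens F (pid (unitO D)) = F.
Proof.
case: F => [[U W] f]; change (ptens (pk f) (pid (unitO D)) = pk f).
by rewrite /pid ptens_pk -{2}(tensm1r HC f) pk_castm.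
Qed.

Lemma ptens_id (X Y : Ob D) : ptens (pid X) (pid Y) = pid (tens X Y).
Proof. by rewrite /ptens /pid /= (tensm_id HC). Qed.

Lemma pcompZl c (F G : PH) : pcomp (psc c F) G = psc c (pcomp F G).
Proof.
rewrite /pcomp /psc /pk /=; case: excluded_middle_informative => e.
  by rewrite (compZl HC).
by rewrite scaler0.
Qed.
Lemma pcompZr c (F G : PH) : pcomp F (psc c G) = psc c (pcomp F G).
Proof.
case: F G => [[U1 W1] f] [[U2 W2] g].
rewrite /pcomp /psc /pk /=; case: excluded_middle_informative => e.
  move: e; rewrite /tgt /src /= => e; move: f g; rewrite /= => f g; subst.
  by rewrite /= (compZr HC).
by rewrite scaler0.
Qed.
Lemma ptensZl c (F G : PH) : ptens (psc c F) G = psc c (ptens F G).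
Proof. by rewrite /ptens /psc /= (tensmZl HC). Qed.
Lemma ptensZr c (F G : PH) : ptens F (psc c G) = psc c (ptens F G).
Proof. by rewrite /ptens /psc /= (tensmZr HC). Qed.
Lemma pscA c c' (F : PH) : psc c (psc c' F) = psc (c * c') F.
Proof. by rewrite /psc /= scalerA. Qed.

Lemma pcomp_idid (X : Ob D) : pcomp (pid X) (pid X) = pid X.
Proof. exact: (pcomp1l (pid X)). Qed.

Lemma ptens_pcompr (X : Ob D) (F G : PH) : tgt G = src F ->
  ptens (pid X) (pcomp F G) = pcomp (ptens (pid X) F) (ptens (pid X) G).
Proof. by move=> e; rewrite -pinter // pcomp_idid. Qed.
Lemma ptens_pcompl (X : Ob D) (F G : PH) : tgt G = src F ->
  ptens (pcomp F G) (pid X) = pcomp (ptens F (pid X)) (ptens G (pid X)).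
Proof. by move=> e; rewrite -pinter // pcomp_idid. Qed.
Lemma pslide1 (F G : PH) (X Y : Ob D) : X = src F -> Y = tgt G ->
  pcomp (ptens F (pid Y)) (ptens (pid X) G) = ptens F G.
Proof. by move=> -> ->; rewrite -pinter // pcomp1r pcomp1l. Qed.
Lemma pslide2 (F G : PH) (X Y : Ob D) : X = tgt F -> Y = src G ->
  pcomp (ptens (pid X) G) (ptens F (pid Y)) = ptens F G.
Proof. by move=> -> ->; rewrite -pinter // pcomp1r pcomp1l. Qed.

End Packed.



Section PsiP.
Variables (k : fieldType) (D : smcat_data k) (HC : smcat_axioms D).
Variables (I : choiceType) (P : psi_data D I) (HP : is_psi_system P).

Local Notation V := (Vo P).
Local Notation "i ^*" := (star P i).
Local Notation PH := (PH D).
Local Notation pk := (@pk _ D _ _).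

Local Notation pcomp_0l := (pcomp_0l HC).
Local Notation pcomp_0r := (pcomp_0r HC).
Local Notation pcompA := (pcompA HC).
Local Notation pcomp1l := (pcomp1l HC).
Local Notation pcomp1r := (pcomp1r HC).
Local Notation pinter := (pinter HC).
Local Notation ptensA := (ptensA HC).
Local Notation ptens1l := (ptens1l HC).
Local Notation ptens1r := (ptens1r HC).
Local Notation ptens_id := (ptens_id HC).
Local Notation pcompZl := (pcompZl HC).
Local Notation pcompZr := (pcompZr HC).
Local Notation ptensZl := (ptensZl HC).
Local Notation ptensZr := (ptensZr HC).
Local Notation pcomp_idid := (pcomp_idid HC).
Local Notation ptens_pcompr := (ptens_pcompr HC).
Local Notation ptens_pcompl := (ptens_pcompl HC).
Local Notation pslide1 := (pslide1 HC).
Local Notation pslide2 := (pslide2 HC).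

Local Notation "F <o> G" := (pcomp F G) (at level 50, left associativity).
Local Notation "F <x> G" := (ptens F G) (at level 40, left associativity).

Definition pb (i : I) : PH := pk (bv P i).
Definition pd (i : I) : PH := pk (dv P i).
Definition pV (i : I) : PH := pid (V i).

Lemma src_ptens (F G : PH) : src (ptens F G) = tens (src F) (src G). Proof. by []. Qed.
Lemma tgt_ptens (F G : PH) : tgt (ptens F G) = tens (tgt F) (tgt G). Proof. by []. Qed.
Lemma src_pcomp (F G : PH) : src (pcomp F G) = src G. Proof. by []. Qed.
Lemma tgt_pcomp (F G : PH) : tgt (pcomp F G) = tgt F. Proof. by []. Qed.
Lemma src_pid (X : Ob D) : src (pid X) = X. Proof. by []. Qed.
Lemma tgt_pid (X : Ob D) : tgt (pid X) = X. Proof. by []. Qed.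
Lemma src_psc (c : k) (F : PH) : src (psc c F) = src F. Proof. by []. Qed.
Lemma tgt_psc (c : k) (F : PH) : tgt (psc c F) = tgt F. Proof. by []. Qed.
Lemma src_pk U W (f : Defs.Hom D U W) : src (pk f) = U. Proof. by []. Qed.
Lemma tgt_pk U W (f : Defs.Hom D U W) : tgt (pk f) = W. Proof. by []. Qed.
Lemma src_pb i : src (pb i) = unitO D. Proof. by []. Qed.
Lemma tgt_pb i : tgt (pb i) = tens (V i) (V i^*). Proof. by []. Qed.
Lemma src_pd i : src (pd i) = tens (V i) (V i^*). Proof. by []. Qed.
Lemma tgt_pd i : tgt (pd i) = unitO D. Proof. by []. Qed.
Lemma src_pV i : src (pV i) = V i. Proof. by []. Qed.
Lemma tgt_pV i : tgt (pV i) = V i. Proof. by []. Qed.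

Ltac srcs := repeat progress rewrite ?src_ptens ?tgt_ptens ?src_pcomp ?tgt_pcomp ?src_pid ?tgt_pid ?src_psc ?tgt_psc
  ?src_pb ?tgt_pb ?src_pd ?tgt_pd ?src_pV ?tgt_pV; rewrite ?src_pk ?tgt_pk.
Ltac onorm := rewrite ?tensA ?tens1U ?tensU1 ?(star_invol P) ?tensA ?tens1U ?tensU1.
Ltac oeq := srcs; onorm.

Lemma pk_cHh1 (a a' : I) (e : a = a') b c (t : Hh P a b c) : pk (cHh1 e t) = pk t.
Proof. by case: a' / e. Qed.
Lemma pk_cHc1 (a a' : I) (e : a = a') b c (t : Hc P a b c) : pk (cHc1 e t) = pk t.
Proof. by case: a' / e. Qed.
Lemma pk_cHh2 (b b' : I) (e : b = b') a c (t : Hh P a b c) : pk (cHh2 e t) = pk t.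
Proof. by case: b' / e. Qed.
Lemma pk_cHc2 (b b' : I) (e : b = b') a c (t : Hc P a b c) : pk (cHc2 e t) = pk t.
Proof. by case: b' / e. Qed.

Lemma pcomp1l' (X : Ob D) (F : PH) : X = tgt F -> pid X <o> F = F.
Proof. by move=> ->; rewrite pcomp1l. Qed.
Lemma pcomp1r' (X : Ob D) (F : PH) : X = src F -> F <o> pid X = F.
Proof. by move=> ->; rewrite pcomp1r. Qed.

Lemma pk_TA_h i j l (y : Hh P i j l) :
  pk (TA_h y) = pcomp (ptens (pV i^*) (pk y)) (ptens (pb i^*) (pV j)).
Proof. by rewrite /TA_h pk_castm pk_compc. Qed.
Lemma pk_TA_c i j l (y : Hc P i j l) :
  pk (TA_c y) = pcomp (ptens (pd i^*) (pV j)) (ptens (pV i^*) (pk y)).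
Proof. by rewrite /TA_c pk_castm pk_compc. Qed.
Lemma pk_TB_h i j l (y : Hh P i j l) :
  pk (TB_h y) = pcomp (ptens (pk y) (pV j^*)) (ptens (pV i) (pb j)).
Proof. by rewrite /TB_h pk_castm pk_compc. Qed.
Lemma pk_TB_c i j l (y : Hc P i j l) :
  pk (TB_c y) = pcomp (ptens (pV i) (pd j)) (ptens (pk y) (pV j^*)).
Proof. by rewrite /TB_c pk_castm pk_compc. Qed.

Lemma pzig i : pcomp (ptens (pV i) (pd i^*)) (ptens (pb i) (pV i)) = pV i.
Proof. by have := f_equal (fun f => pk f) (psi_zig HP i); rewrite /zig pk_castm pk_compc. Qed.
Lemma pzag i : pcomp (ptens (pd i) (pV i)) (ptens (pV i) (pb i^*)) = pV i.
Proof. by have := f_equal (fun f => pk f) (psi_zag HP i); rewrite /zag pk_castm pk_compc. Qed.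

Lemma Z1 i j l (y : Hh P i j l) : pk (TA_c (TA_h y)) = pk y.
Proof.
rewrite pk_TA_c pk_TA_h !(star_invol P).
rewrite ptens_pcompr; last by oeq.
rewrite -pcompA -ptensA ptens_id (@pslide1 (pd i) (pk y)); try by oeq.
rewrite -(@pslide2 (pd i) (pk y) (unitO D) (tens (V i) (V j))); try by oeq.
rewrite ptens1l pcompA -(ptens_id (V i) (V j)) -!ptensA -pinter; try by oeq.
by rewrite pzag pcomp_idid ptens_id (pcomp1r (pk y)).
Qed.

Lemma Z2 i j l (y : Hc P i j l) : pk (TA_h (TA_c y)) = pk y.
Proof.
rewrite pk_TA_h pk_TA_c !(star_invol P).
rewrite ptens_pcompr; last by oeq.
rewrite pcompA -[ptens (pid (V i)) (ptens (pV i^*) (pk y))]ptensA ptens_id (@pslide2 (pb i) (pk y)); try by oeq.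
rewrite -(@pslide1 (pb i) (pk y) (unitO D) (tens (V i) (V j))); try by oeq.
rewrite ptens1l -pcompA -(ptens_id (V i) (V j)) -!ptensA -pinter; try by oeq.
by rewrite pzig pcomp_idid ptens_id (pcomp1l (pk y)).
Qed.

Lemma Z3 i j l (y : Hh P i j l) : pk (TB_c (TB_h y)) = pk y.
Proof.
rewrite pk_TB_c pk_TB_h !(star_invol P).
rewrite ptens_pcompl; last by oeq.
rewrite -pcompA ptensA ptens_id (@pslide2 (pk y) (pd j^*)); try by oeq.
rewrite -(@pslide1 (pk y) (pd j^*) (tens (V i) (V j)) (unitO D)); try by oeq.
rewrite ptens1r pcompA -(ptens_id (V i) (V j)) !ptensA -pinter; try by oeq.
by rewrite pzig pcomp_idid ptens_id (pcomp1r (pk y)).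
Qed.

Lemma Z4 i j l (y : Hc P i j l) : pk (TB_h (TB_c y)) = pk y.
Proof.
rewrite pk_TB_h pk_TB_c !(star_invol P).
rewrite ptens_pcompl; last by oeq.
rewrite pcompA [ptens (ptens (pk y) _) _]ptensA ptens_id (@pslide1 (pk y) (pb j^*)); try by oeq.
rewrite -(@pslide2 (pk y) (pb j^*) (tens (V i) (V j)) (unitO D)); try by oeq.
rewrite ptens1r -pcompA -(ptens_id (V i) (V j)) !ptensA -pinter; try by oeq.
by rewrite pzag pcomp_idid ptens_id (pcomp1l (pk y)).
Qed.


Definition fAh i j (Y : PH) := (pV i^* <x> Y) <o> (pb i^* <x> pV j).
Definition fAc i j (Y : PH) := (pd i^* <x> pV j) <o> (pV i^* <x> Y).
Definition fBh i j (Y : PH) := (Y <x> pV j^*) <o> (pV i <x> pb j).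
Definition fBc i j (Y : PH) := (pV i <x> pd j) <o> (Y <x> pV j^*).

Lemma CLb x y z (f : Hc P x y z) (g : Hh P x y z) :
  (pd x <x> pV z) <o> ((fBc x y (pk f) <x> fAh x y (pk g)) <o> (pV z <x> pb y^*))
  = pk (Defs.comp g f).
Proof.
rewrite -(@pslide2 (fBc x y (pk f)) (fAh x y (pk g)) (V x) (V y)); try by oeq.
rewrite !pcompA /fBc ptens_pcompl; last by oeq.
rewrite pcompA [(pk f <x> pV y^*) <x> pV y]ptensA ptens_id.
rewrite (@pslide1 (pk f) (pb y^*)); try by oeq.
rewrite -(@pslide2 (pk f) (pb y^*) (tens (V x) (V y)) (unitO D)); try by oeq.
rewrite ptens1r [(pV x <x> pd y) <x> pV y]ptensA -(ptens_id (V x) (V y)) ptensA.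
rewrite -[_ <o> (_ <o> pk f)]pcompA -[(pV x <x> _) <o> (pid (V x) <x> _)]pinter; try by oeq.
rewrite pzag pcomp_idid ptens_id (pcomp1l (pk f)).
rewrite /fAh ptens_pcompr; last by oeq.
rewrite !pcompA -[(pd x <x> pV z) <o> _]pcompA -[pV x <x> (pV x^* <x> pk g)]ptensA ptens_id.
rewrite (@pslide1 (pd x) (pk g)); try by oeq.
rewrite -(@pslide2 (pd x) (pk g) (unitO D) (tens (V x) (V y))); try by oeq.
rewrite ptens1l pcompA -(ptens_id (V x) (V y)) -[pd x <x> (_ <x> _)]ptensA.
rewrite -[pV x <x> (pb x^* <x> _)]ptensA.
rewrite -[_ <o> (_ <o> pk f)]pcompA -[(pd x <x> _ <x> _) <o> _]pinter; try by oeq.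
by rewrite pzag pcomp_idid ptens_id (pcomp1l (pk f)) pcomp_pk.
Qed.

Lemma CLa x y z (U W : PH) :
  src U = tens (V z) (V y^*) -> tgt U = V x ->
  src W = V y -> tgt W = tens (V x^*) (V z) ->
  fBc (z^*) x (fAh z (y^*) U) <o> fAh y (z^*) (fBc (x^*) z W) =
  (pV z^* <x> pd z) <o> (((pV z^* <x>
     ((pd x <x> pV z) <o> ((U <x> W) <o> (pV z <x> pb y^*)))) <x> pV z^*)
     <o> (pb z^* <x> pV z^*)).
Proof.
move=> hUs hUt hWs hWt.
Ltac oeq2 hUs hUt hWs hWt := srcs; rewrite ?hUs ?hUt ?hWs ?hWt; onorm.
rewrite /fBc /fAh.
rewrite ptens_pcompl; last by oeq2 hUs hUt hWs hWt.
rewrite ptens_pcompr; last by oeq2 hUs hUt hWs hWt.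
rewrite !pcompA.
rewrite [(pb z^* <x> pV y^*) <x> _]ptensA -[pid (V y^*) <x> (pV x^* <x> pd z)]ptensA !ptens_id.
rewrite -[pid (tens (V y^*) (V x^*)) <x> pd z]ptens1l.
rewrite -[_ <o> (pid (unitO D) <x> _ <o> _)]pcompA.
rewrite (@pslide1 (pb z^*) (pid (tens (V y^*) (V x^*)) <x> pd z)); try by oeq2 hUs hUt hWs hWt.
rewrite -(@pslide2 (pb z^*) (pid (tens (V y^*) (V x^*)) <x> pd z) (tens (V z^*) (V z))
   (tens (tens (V y^*) (V x^*)) (tens (V z) (V z^*)))); try by oeq2 hUs hUt hWs hWt.
rewrite [(_ <o> (pb z^* <x> _)) <o> _]pcompA.
rewrite -[(pb z^* <x> _) <o> (_ <o> (pb y^* <x> _))]pcompA.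
rewrite -[pid (V y^*) <x> (W <x> pV z^*)]ptens1l.
rewrite (@pslide1 (pb z^*) (pid (V y^*) <x> (W <x> pV z^*))); try by oeq2 hUs hUt hWs hWt.
rewrite -(@pslide2 (pb z^*) (pid (V y^*) <x> (W <x> pV z^*)) (tens (V z^*) (V z))
  (tens (V y^*) (tens (V y) (V z^*)))); try by oeq2 hUs hUt hWs hWt.
rewrite [(_ <o> (pb z^* <x> pid (tens (V y^*) _))) <o> _]pcompA.
rewrite -[pb y^* <x> pV z^*]ptens1l (@pslide1 (pb z^*) (pb y^* <x> pV z^*)); try by oeq2 hUs hUt hWs hWt.
rewrite -(@pslide2 (pb z^*) (pb y^* <x> pV z^*) (tens (V z^*) (V z)) (V z^*)); try by oeq2 hUs hUt hWs hWt.
rewrite -[(pV z^* <x> U <x> pid (V x^*)) <o> _]pcompA.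
rewrite -[pid (tens (V z^*) (V z)) <x> (pid (tens (V y^*) (V x^*)) <x> pd z)]ptensA ptens_id.
rewrite -[pV z^* <x> U <x> pid (V x^*)]ptens1r.
rewrite (@pslide1 (pV z^* <x> U <x> pid (V x^*)) (pd z)); try by oeq2 hUs hUt hWs hWt.
rewrite -(@pslide2 (pV z^* <x> U <x> pid (V x^*)) (pd z) (tens (tens (V z^*) (V x)) (V x^*))
  (tens (V z) (V z^*))); try by oeq2 hUs hUt hWs hWt.
rewrite pcompA -[(pV z^* <x> pd x) <o> _]pcompA -[pV z^* <x> pd x]ptens1r.
rewrite (@pslide1 (pV z^* <x> pd x) (pd z)); try by oeq2 hUs hUt hWs hWt.
rewrite -(@pslide2 (pV z^* <x> pd x) (pd z) (V z^*) (tens (V z) (V z^*))); try by oeq2 hUs hUt hWs hWt.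
rewrite ptens_pcompr; last by oeq2 hUs hUt hWs hWt.
rewrite ptens_pcompl; last by oeq2 hUs hUt hWs hWt.
rewrite ptens_pcompr; last by oeq2 hUs hUt hWs hWt.
rewrite ptens_pcompl; last by oeq2 hUs hUt hWs hWt.
have e3 : pV z^* <x> pd x <x> pid (tens (V z) (V z^*)) = pV z^* <x> (pd x <x> pV z) <x> pV z^*.
  by rewrite -ptens_id !ptensA.
have e1 : pid (tens (V z^*) (V z)) <x> (pb y^* <x> pV z^*) = pV z^* <x> (pV z <x> pb y^*) <x> pV z^*.
  by rewrite -ptens_id !ptensA.
have e2 : (pV z^* <x> U <x> pid (V x^*) <x> pid (tens (V z) (V z^*))) <o>
   (pid (tens (V z^*) (V z)) <x> (pid (V y^*) <x> (W <x> pV z^*))) =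
   pV z^* <x> (U <x> W) <x> pV z^*.
  rewrite !ptensA ptens_id -[pid (tens (V z^*) (V z))]ptens_id ptensA.
  rewrite -[pid (V z) <x> (pid (V y^*) <x> _)]ptensA ptens_id -pinter; try by oeq2 hUs hUt hWs hWt.
  rewrite pcomp_idid (@pslide1 U (W <x> pV z^*)) //; by oeq2 hUs hUt hWs hWt.
by rewrite e3 e1 -e2 /pV !pcompA.
Qed.

Lemma scalE i (f : Defs.Hom D (V i) (V i)) : f = scal HP f *: idm (V i).
Proof. by apply/eqP; rewrite /scal; exact: (xchooseP (simple_exb HP f)). Qed.

Lemma scal_uniq i (f : Defs.Hom D (V i) (V i)) c : f = c *: idm (V i) -> scal HP f = c.
Proof.
move=> hf; have := scalE f; rewrite {1}hf => /eqP; rewrite -subr_eq0 -scalerBl scaler_eq0.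
by rewrite (negPf (psi_simple_neq0 HP i)) orbF subr_eq0 => /eqP ->.
Qed.

Lemma pk_end i (f : Defs.Hom D (V i) (V i)) : pk f = psc (scal HP f) (pV i).
Proof. by rewrite {1}(scalE f). Qed.

Lemma CL x y z (f : Hc P x y z) (g : Hh P x y z) :
  pk (Defs.comp (TB_c (TA_h (TB_c f))) (TA_h (TB_c (TA_h g)))) =
  psc (scal HP (Defs.comp g f)) (pV z^*).
Proof.
rewrite -pcomp_pk !pk_TB_c !pk_TA_h !pk_TB_c !pk_TA_h -/(fBc _ _ _) -/(fAh _ _ _).
rewrite -/(fBc _ _ _) -/(fAh _ _ _) -/(fBc _ _ _) -/(fAh _ _ _).
rewrite CLa; try by oeq.
rewrite CLb pk_end.
rewrite ptensZr ptensZl pcompZl pcompZr !ptens_id pcomp1l'; last by oeq.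
by have := pzig (z^*); rewrite (star_invol P) => ->.
Qed.

Ltac oeqh hs ht := srcs; rewrite ?hs ?ht; onorm.

Lemma gZ1 i j l (X : PH) : src X = tens (V i) (V j) -> tgt X = V l -> fAc i^* l (fAh i j X) = X.
Proof.
move=> hs ht.
rewrite /fAc /fAh !(star_invol P).
rewrite ptens_pcompr; last by oeqh hs ht.
rewrite -pcompA -ptensA ptens_id (@pslide1 (pd i) X); try by oeqh hs ht.
rewrite -(@pslide2 (pd i) X (unitO D) (tens (V i) (V j))); try by oeqh hs ht.
rewrite ptens1l pcompA -(ptens_id (V i) (V j)) -!ptensA -pinter; try by oeqh hs ht.
by rewrite pzag pcomp_idid ptens_id pcomp1r'; last by oeqh hs ht.
Qed.

Lemma gZ2 i j l (X : PH) : src X = V l -> tgt X = tens (V i) (V j) -> fAh i^* l (fAc i j X) = X.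
Proof.
move=> hs ht.
rewrite /fAh /fAc !(star_invol P).
rewrite ptens_pcompr; last by oeqh hs ht.
rewrite pcompA -[ptens (pid (V i)) (ptens (pV i^*) X)]ptensA ptens_id (@pslide2 (pb i) X); try by oeqh hs ht.
rewrite -(@pslide1 (pb i) X (unitO D) (tens (V i) (V j))); try by oeqh hs ht.
rewrite ptens1l -pcompA -(ptens_id (V i) (V j)) -!ptensA -pinter; try by oeqh hs ht.
by rewrite pzig pcomp_idid ptens_id pcomp1l'; last by oeqh hs ht.
Qed.

Lemma gZ3 i j l (X : PH) : src X = tens (V i) (V j) -> tgt X = V l -> fBc l j^* (fBh i j X) = X.
Proof.
move=> hs ht.
rewrite /fBc /fBh !(star_invol P).
rewrite ptens_pcompl; last by oeqh hs ht.
rewrite -pcompA ptensA ptens_id (@pslide2 X (pd j^*)); try by oeqh hs ht.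
rewrite -(@pslide1 X (pd j^*) (tens (V i) (V j)) (unitO D)); try by oeqh hs ht.
rewrite ptens1r pcompA -(ptens_id (V i) (V j)) !ptensA -pinter; try by oeqh hs ht.
by rewrite pzig pcomp_idid ptens_id pcomp1r'; last by oeqh hs ht.
Qed.

Lemma gZ4 i j l (X : PH) : src X = V l -> tgt X = tens (V i) (V j) -> fBh l j^* (fBc i j X) = X.
Proof.
move=> hs ht.
rewrite /fBh /fBc !(star_invol P).
rewrite ptens_pcompl; last by oeqh hs ht.
rewrite pcompA [ptens (ptens X _) _]ptensA ptens_id (@pslide1 X (pb j^*)); try by oeqh hs ht.
rewrite -(@pslide2 X (pb j^*) (tens (V i) (V j)) (unitO D)); try by oeqh hs ht.
rewrite ptens1r -pcompA -(ptens_id (V i) (V j)) !ptensA -pinter; try by oeqh hs ht.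
by rewrite pzag pcomp_idid ptens_id pcomp1l'; last by oeqh hs ht.
Qed.

Definition FT1 p q r X := fAc q r^* (fBh p^* r (fAc p q X)).
Definition FT1' a b c X := fAh b c^* (fBc a^* c (fAh a b X)).
Definition FT2 a b c X := fBc c^* a (fAh c b^* (fBc a b X)).
Definition FT2' p q r X := fBh r^* p (fAc r q^* (fBh p q X)).

Lemma I1 p q r (X : PH) : src X = V r -> tgt X = tens (V p) (V q) ->
  FT1' q^* p^* r^* (FT1 p q r X) = X.
Proof.
move=> hs ht; rewrite /FT1 /FT1' (@gZ2 q r^* p^*); try by oeqh hs ht.
rewrite !(star_invol P) (@gZ3 p^* r q); try by oeqh hs ht.
by rewrite (@gZ2 p q r); try by oeqh hs ht.
Qed.

Lemma I2 p q r (X : PH) : src X = tens (V p) (V q) -> tgt X = V r ->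
  FT1 q^* p^* r^* (FT1' p q r X) = X.
Proof.
move=> hs ht; rewrite /FT1 /FT1' (@gZ1 q r^* p^*); try by oeqh hs ht.
rewrite !(star_invol P) (@gZ4 p^* r q); try by oeqh hs ht.
by rewrite (@gZ1 p q r); try by oeqh hs ht.
Qed.

Lemma I3 p q r (X : PH) : src X = tens (V p) (V q) -> tgt X = V r ->
  FT2 q^* p^* r^* (FT2' p q r X) = X.
Proof.
move=> hs ht; rewrite /FT2 /FT2' (@gZ3 r^* p q^*); try by oeqh hs ht.
rewrite !(star_invol P) (@gZ2 r q^* p); try by oeqh hs ht.
by rewrite (@gZ3 p q r); try by oeqh hs ht.
Qed.

Lemma psc_inj i (c1 c2 : k) : psc c1 (pV i) = psc c2 (pV i) -> c1 = c2.
Proof.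
move=> /pk_inj e.
by rewrite -(@scal_uniq i (c1 *: idm (V i)) c1) // (@scal_uniq i (c1 *: idm (V i)) c2).
Qed.

Lemma CLf a b c (f : Hc P a b c) (g : Hh P a b c) :
  FT2 a b c (pk f) <o> FT1' a b c (pk g) = psc (scal HP (Defs.comp g f)) (pV c^*).
Proof. by rewrite -CL -pcomp_pk !pk_TB_c !pk_TA_h !pk_TB_c !pk_TA_h. Qed.

Lemma CLf' a b c (f : Hc P a b c) (g : Hh P a b c) :
  FT1 a b c (pk f) <o> FT2' a b c (pk g) = psc (scal HP (Defs.comp g f)) (pV c^*).
Proof.
have hF : pk (TA_c (TB_h (TA_c f))) = FT1 a b c (pk f) by rewrite !pk_TA_c pk_TB_h pk_TA_c.
have hG : pk (TB_h (TA_c (TB_h g))) = FT2' a b c (pk g) by rewrite !pk_TB_h pk_TA_c pk_TB_h.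
have := CLf (TB_h (TA_c (TB_h g))) (TA_c (TB_h (TA_c f))).
rewrite hF hG I3 ?I1 //; try by oeq.
rewrite pcomp_pk pk_end (star_invol P) => /psc_inj ->.
by rewrite -hF -hG pcomp_pk pk_end.
Qed.

End PsiP.



Section SumLemmas.
Variables (k : fieldType) (I : eqType).

Lemma sum_sub1 (t u : seq I) (G : I -> k) : uniq t -> uniq u -> {subset t <= u} ->
  (forall i, i \notin t -> G i = 0) -> \sum_(i <- u) G i = \sum_(i <- t) G i.
Proof.
move=> ut uu tu hG.
rewrite (bigID (fun i => i \in t)) /= [X in _ + X]big1 ?addr0; last by move=> i /hG.
rewrite -big_filter; apply: perm_big; apply: uniq_perm; rewrite ?filter_uniq //.
by move=> i; rewrite mem_filter; case: (boolP (i \in t)) => //= /tu ->.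
Qed.

Lemma sum_sub3 (t u : seq I) (F : I -> I -> I -> k) : uniq t -> uniq u -> {subset t <= u} ->
  (forall i j l, ~~ [&& i \in t, j \in t & l \in t] -> F i j l = 0) ->
  \sum_(i <- u) \sum_(j <- u) \sum_(l <- u) F i j l =
  \sum_(i <- t) \sum_(j <- t) \sum_(l <- t) F i j l.
Proof.
move=> ut uu tu hF.
rewrite (@sum_sub1 t u) //; last first.
  by move=> i hi; rewrite big1 // => j _; rewrite big1 // => l _; apply: hF; rewrite (negPf hi).
apply: eq_bigr => i _; rewrite (@sum_sub1 t u) //; last first.
  by move=> j hj; rewrite big1 // => l _; apply: hF; rewrite (negPf hj) andbF.
apply: eq_bigr => j _; rewrite (@sum_sub1 t u) //.
by move=> l hl; apply: hF; rewrite (negPf hl) !andbF.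
Qed.

Lemma sum_reindex (s : seq I) (f : I -> I) (G : I -> k) : uniq s -> involutive f ->
  (forall i, i \in s -> f i \in s) -> \sum_(i <- s) G (f i) = \sum_(i <- s) G i.
Proof.
move=> us finv hs; rewrite -(big_map f xpredT G); apply: perm_big; apply: uniq_perm => //.
  by rewrite map_inj_uniq //; apply: inv_inj.
move=> i; apply/mapP/idP => [[j hj ->]|hi]; first exact: hs.
by exists (f i); [exact: hs | rewrite finv].
Qed.

End SumLemmas.

Section HspL.
Variables (k : fieldType) (D : smcat_data k) (HC : smcat_axioms D).
Variables (I : choiceType) (P : psi_data D I) (HP : is_psi_system P).

Local Notation V := (Vo P).
Local Notation "i ^*" := (star P i).
Local Notation PH := (PH D).
Local Notation pk := (@pk _ D _ _).
Local Notation "F <o> G" := (pcomp F G) (at level 50, left associativity).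
Local Notation "F <x> G" := (ptens F G) (at level 40, left associativity).
Local Notation H := (Hsp P).
Local Notation A := (opA HC).
Local Notation B := (opB HC).
Local Notation fm := (Defs.form HP).
Local Notation fAc := (fAc P). Local Notation fAh := (fAh P).
Local Notation fBc := (fBc P). Local Notation fBh := (fBh P).
Local Notation FT1 := (FT1 P). Local Notation FT1' := (FT1' P).
Local Notation FT2 := (FT2 P). Local Notation FT2' := (FT2' P).
Local Notation I1 := (I1 HC HP). Local Notation I2 := (I2 HC HP). Local Notation I3 := (I3 HC HP).
Local Notation CLf := (CLf HC HP). Local Notation CLf' := (CLf' HC HP).
Local Notation psc_inj := (psc_inj HP). Local Notation pk_end := (pk_end HP).
Local Notation pV := (pV P).

Lemma Hsp_ext (x y : H) : (forall i j l, xh x i j l = xh y i j l) ->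
  (forall i j l, xc x i j l = xc y i j l) -> x = y.
Proof.
case: x y => [hx cx fx] [hy cy fy] /= eh ec.
have eh' : hx = hy.
  apply: functional_extensionality_dep => i; apply: functional_extensionality_dep => j.
  by apply: functional_extensionality_dep => l.
have ec' : cx = cy.
  apply: functional_extensionality_dep => i; apply: functional_extensionality_dep => j.
  by apply: functional_extensionality_dep => l.
by subst; rewrite (proof_irrelevance _ fx fy).
Qed.

Lemma scal0 i : scal HP (0 : Defs.Hom D (V i) (V i)) = 0.
Proof. by apply: scal_uniq; rewrite scale0r. Qed.

Definition term (x y : H) i j l :=
  scal HP (Defs.comp (xh x i j l) (xc y i j l)) + scal HP (Defs.comp (xh y i j l) (xc x i j l)).

Definition vanish (s : seq I) (x : H) := forall i j l, ~~ [&& i \in s, j \in s & l \in s] ->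
  xh x i j l = 0 /\ xc x i j l = 0.

Lemma vanish_supp x : vanish (supp x) x.
Proof. by rewrite /supp; case: constructive_indefinite_description. Qed.

Lemma vanish_sub s t x : {subset s <= t} -> vanish s x -> vanish t x.
Proof.
move=> st hv i j l hn; apply: hv; apply: contra hn => /and3P [hi hj hl].
by rewrite !st.
Qed.

Lemma term0 (x y : H) s i j l : vanish s x -> ~~ [&& i \in s, j \in s & l \in s] -> term x y i j l = 0.
Proof.
move=> hv hn; rewrite /term; case: (hv _ _ _ hn) => -> ->.
by rewrite (comp0l HC) (comp0r HC) !scal0 addr0.
Qed.

Lemma form_eq (x y : H) (s : seq I) : uniq s -> vanish s x ->
  fm x y = \sum_(i <- s) \sum_(j <- s) \sum_(l <- s) term x y i j l.
Proof.
move=> us hv; rewrite /Defs.form.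
set t := undup (supp x).
have ht : vanish t x.
  by apply: (@vanish_sub (supp x)); [move=> i; rewrite mem_undup | exact: vanish_supp].
rewrite -(@sum_sub3 _ _ t (undup (t ++ s))) ?undup_uniq //; last 2 first.
- by move=> i hi; rewrite mem_undup mem_cat hi.
- by move=> i j l hn; exact: term0 ht hn.
rewrite (@sum_sub3 _ _ s (undup (t ++ s))) ?undup_uniq //.
- by move=> i hi; rewrite mem_undup mem_cat hi orbT.
- by move=> i j l hn; exact: term0 hv hn.
Qed.

Lemma form_sym (x y : H) : fm x y = fm y x.
Proof.
set s := undup (supp x ++ supp y).
have hx : vanish s x.
  by apply: (@vanish_sub (supp x)); [move=> i hi; rewrite mem_undup mem_cat hi | exact: vanish_supp].
have hy : vanish s y.
  by apply: (@vanish_sub (supp y)); [move=> i hi; rewrite mem_undup mem_cat hi orbT | exact: vanish_supp].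
rewrite (form_eq y (undup_uniq _) hx) (form_eq x (undup_uniq _) hy).
by apply: eq_bigr => i _; apply: eq_bigr => j _; apply: eq_bigr => l _; rewrite /term addrC.
Qed.

Definition cl (s : seq I) := undup (s ++ map (star P) s).
Lemma cl_uniq s : uniq (cl s). Proof. exact: undup_uniq. Qed.
Lemma cl_sub s : {subset s <= cl s}.
Proof. by move=> i hi; rewrite mem_undup mem_cat hi. Qed.
Lemma cl_closed s i : i \in cl s -> i^* \in cl s.
Proof.
rewrite !mem_undup !mem_cat => /orP [hi|/mapP [j hj ->]].
  by rewrite map_f ?orbT.
by rewrite (star_invol P) hj.
Qed.
Lemma cl_star s i : (i^* \in cl s) = (i \in cl s).
Proof. by apply/idP/idP => /cl_closed //; rewrite (star_invol P). Qed.

Lemma vanish_A s (x : H) : vanish (cl s) x -> vanish (cl s) (A x).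
Proof.
move=> hv a b c hn.
have [h1 h2] : xh x a^* c b = 0 /\ xc x a^* c b = 0.
  by apply: hv; apply: contra hn => /and3P [ha hc hb]; rewrite -cl_star ha hb hc.
by rewrite /= /ahA /acA h1 h2 (TA_c0 P HC) (TA_h0 P HC) cHh1_0 cHc1_0.
Qed.

Lemma vanish_B s (x : H) : vanish (cl s) x -> vanish (cl s) (B x).
Proof.
move=> hv a b c hn.
have [h1 h2] : xh x c b^* a = 0 /\ xc x c b^* a = 0.
  by apply: hv; apply: contra hn => /and3P [hc hb ha]; rewrite -[b \in _]cl_star ha hb hc.
by rewrite /= /ahB /acB h1 h2 (TB_c0 P HC) (TB_h0 P HC) cHh2_0 cHc2_0.
Qed.

Lemma pk_xhA (x : H) a b c : pk (xh (A x) a b c) = fAc a^* c (pk (xc x a^* c b)).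
Proof. by rewrite /= /ahA pk_cHh1 pk_TA_c. Qed.
Lemma pk_xcA (x : H) a b c : pk (xc (A x) a b c) = fAh a^* c (pk (xh x a^* c b)).
Proof. by rewrite /= /acA pk_cHc1 pk_TA_h. Qed.
Lemma pk_xhB (x : H) a b c : pk (xh (B x) a b c) = fBc c b^* (pk (xc x c b^* a)).
Proof. by rewrite /= /ahB pk_cHh2 pk_TB_c. Qed.
Lemma pk_xcB (x : H) a b c : pk (xc (B x) a b c) = fBh c b^* (pk (xh x c b^* a)).
Proof. by rewrite /= /acB pk_cHc2 pk_TB_h. Qed.

Lemma KC (x y : H) i j l :
  scal HP (Defs.comp (xh (A (B (A x))) i j l) (xc y i j l)) =
  scal HP (Defs.comp (xh (B (A (B y))) j^* i^* l^*) (xc x j^* i^* l^*)).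
Proof.
have hw : pk (xh (A (B (A x))) i j l) = FT1 j^* i^* l^* (pk (xc x j^* i^* l^*)).
  by rewrite pk_xhA pk_xcB pk_xhA /FT1 !(star_invol P).
have hw' : pk (xh (B (A (B y))) j^* i^* l^*) = FT2 i j l (pk (xc y i j l)).
  by rewrite pk_xhB pk_xcA pk_xhB /FT2 !(star_invol P).
have := CLf (xc y i j l) (xh (A (B (A x))) i j l).
rewrite -hw' hw.
have e := @I1 j^* i^* l^* (pk (xc x j^* i^* l^*)) erefl erefl.
rewrite !(star_invol P) in e.
by rewrite e pcomp_pk pk_end => /psc_inj.
Qed.

Lemma KH (x y : H) i j l :
  scal HP (Defs.comp (xh y i j l) (xc (A (B (A x))) i j l)) =
  scal HP (Defs.comp (xh x j^* i^* l^*) (xc (B (A (B y))) j^* i^* l^*)).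
Proof.
have hw : pk (xc (A (B (A x))) i j l) = FT1' j^* i^* l^* (pk (xh x j^* i^* l^*)).
  by rewrite pk_xcA pk_xhB pk_xcA /FT1' !(star_invol P).
have hw' : pk (xc (B (A (B y))) j^* i^* l^*) = FT2' i j l (pk (xh y i j l)).
  by rewrite pk_xcB pk_xhA pk_xcB /FT2' !(star_invol P).
have := CLf' (xc (A (B (A x))) i j l) (xh y i j l).
rewrite -hw' hw.
have e := @I2 j^* i^* l^* (pk (xh x j^* i^* l^*)) erefl erefl.
rewrite !(star_invol P) in e.
by rewrite e pcomp_pk pk_end => /psc_inj.
Qed.

Lemma vanish_cl (x y : H) : vanish (cl (supp x ++ supp y)) x /\ vanish (cl (supp x ++ supp y)) y.
Proof.
split.
  apply: (@vanish_sub (supp x)); last exact: vanish_supp.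
  by move=> i hi; apply: cl_sub; rewrite mem_cat hi.
apply: (@vanish_sub (supp y)); last exact: vanish_supp.
by move=> i hi; apply: cl_sub; rewrite mem_cat hi orbT.
Qed.

Lemma Qid (x y : H) : fm (A (B (A x))) y = fm x (B (A (B y))).
Proof.
have [hx hy] := vanish_cl x y.
set s := cl _ in hx hy.
have hABA : vanish s (A (B (A x))) by apply: vanish_A; apply: vanish_B; apply: vanish_A.
rewrite (form_eq _ (cl_uniq _) hABA) (form_eq _ (cl_uniq _) hx).
have si := star_invol P.
have sc : forall i, i \in s -> i^* \in s by move=> i; apply: cl_closed.
transitivity (\sum_(i <- s) \sum_(j <- s) \sum_(l <- s) term x (B (A (B y))) (star P j) (star P i) (star P l)).
  apply: eq_bigr => i _; apply: eq_bigr => j _; apply: eq_bigr => l _.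
  by rewrite /term KC KH addrC.
transitivity (\sum_(i <- s) \sum_(j <- s) \sum_(l <- s) term x (B (A (B y))) j i l).
  rewrite -(@sum_reindex _ _ s (star P) (fun i => \sum_(j <- s) \sum_(l <- s) term x (B (A (B y))) j i l)) ?cl_uniq //.
  apply: eq_bigr => i _.
  rewrite -(@sum_reindex _ _ s (star P) (fun j => \sum_(l <- s) term x (B (A (B y))) j (star P i) l)) ?cl_uniq //.
  apply: eq_bigr => j _.
  by rewrite -(@sum_reindex _ _ s (star P) (fun l => term x (B (A (B y))) (star P j) (star P i) l)) ?cl_uniq.
by rewrite exchange_big.
Qed.

End HspL.



Section HspM.
Variables (k : fieldType) (D : smcat_data k) (HC : smcat_axioms D).
Variables (I : choiceType) (P : psi_data D I) (HP : is_psi_system P).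

Local Notation V := (Vo P).
Local Notation "i ^*" := (star P i).
Local Notation PH := (PH D).
Local Notation pk := (@pk _ D _ _).
Local Notation H := (Hsp P).
Local Notation A := (opA HC).
Local Notation B := (opB HC).
Local Notation fm := (Defs.form HP).
Local Notation gZ1 := (gZ1 HC HP). Local Notation gZ2 := (gZ2 HC HP).
Local Notation gZ3 := (gZ3 HC HP). Local Notation gZ4 := (gZ4 HC HP).
Local Notation pk_xhA := (pk_xhA HC). Local Notation pk_xcA := (pk_xcA HC).
Local Notation pk_xhB := (pk_xhB HC). Local Notation pk_xcB := (pk_xcB HC).
Local Notation form_eq := (form_eq HC HP).
Local Notation form_sym := (form_sym HC HP).

Lemma A2 (x : H) : A (A x) = x.
Proof.
apply: Hsp_ext => a b c; apply: pk_inj.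
  by rewrite pk_xhA pk_xcA !(star_invol P) gZ1.
by rewrite pk_xcA pk_xhA !(star_invol P) gZ2.
Qed.

Lemma B2 (x : H) : B (B x) = x.
Proof.
apply: Hsp_ext => a b c; apply: pk_inj.
  by rewrite pk_xhB pk_xcB !(star_invol P) gZ3.
by rewrite pk_xcB pk_xhB !(star_invol P) gZ4.
Qed.

Lemma sum3_single (s : seq I) (F : I -> I -> I -> k) i0 j0 l0 : uniq s ->
  i0 \in s -> j0 \in s -> l0 \in s ->
  (forall i j l, (i, j, l) != (i0, j0, l0) -> F i j l = 0) ->
  \sum_(i <- s) \sum_(j <- s) \sum_(l <- s) F i j l = F i0 j0 l0.
Proof.
move=> us hi hj hl hF.
rewrite (bigD1_seq i0) //= [X in _ + X]big1 ?addr0; last first.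
  move=> i /negPf ne; rewrite big1 // => j _; rewrite big1 // => l _.
  by apply: hF; rewrite !xpair_eqE ne.
rewrite (bigD1_seq j0) //= [X in _ + X]big1 ?addr0; last first.
  move=> j /negPf ne; rewrite big1 // => l _.
  by apply: hF; rewrite !xpair_eqE ne andbF.
rewrite (bigD1_seq l0) //= [X in _ + X]big1 ?addr0 // => l /negPf ne.
by apply: hF; rewrite !xpair_eqE ne !andbF.
Qed.

Section Single.
Variables (i0 j0 l0 : I).

Definition trc (w : Hc P i0 j0 l0) (i j l : I) : Hc P i j l :=
  match i0 =P i, j0 =P j, l0 =P l with
  | ReflectT e1, ReflectT e2, ReflectT e3 =>
      castm D (f_equal V e3) (f_equal2 tens (f_equal V e1) (f_equal V e2)) w
  | _, _, _ => 0 end.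
Definition trh (w : Hh P i0 j0 l0) (i j l : I) : Hh P i j l :=
  match i0 =P i, j0 =P j, l0 =P l with
  | ReflectT e1, ReflectT e2, ReflectT e3 =>
      castm D (f_equal2 tens (f_equal V e1) (f_equal V e2)) (f_equal V e3) w
  | _, _, _ => 0 end.

Lemma trc_eq w : trc w i0 j0 l0 = w.
Proof.
rewrite /trc; case: (i0 =P i0) => [e1|[]] //; case: (j0 =P j0) => [e2|[]] //; case: (l0 =P l0) => [e3|[]] //.
move: (f_equal V e3) (f_equal2 tens (f_equal V e1) (f_equal V e2)) => E1 E2.
by rewrite (proof_irrelevance _ E1 erefl) (proof_irrelevance _ E2 erefl).
Qed.
Lemma trh_eq w : trh w i0 j0 l0 = w.
Proof.
rewrite /trh; case: (i0 =P i0) => [e1|[]] //; case: (j0 =P j0) => [e2|[]] //; case: (l0 =P l0) => [e3|[]] //.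
move: (f_equal V e3) (f_equal2 tens (f_equal V e1) (f_equal V e2)) => E1 E2.
by rewrite (proof_irrelevance _ E1 erefl) (proof_irrelevance _ E2 erefl).
Qed.
Lemma trc_ne w i j l : (i, j, l) != (i0, j0, l0) -> trc w i j l = 0.
Proof.
rewrite /trc; case: (i0 =P i) => [e1|//]; case: (j0 =P j) => [e2|//]; case: (l0 =P l) => [e3|//].
by subst; rewrite eqxx.
Qed.
Lemma trh_ne w i j l : (i, j, l) != (i0, j0, l0) -> trh w i j l = 0.
Proof.
rewrite /trh; case: (i0 =P i) => [e1|//]; case: (j0 =P j) => [e2|//]; case: (l0 =P l) => [e3|//].
by subst; rewrite eqxx.
Qed.

Lemma sgl_fin_c (w : Hc P i0 j0 l0) : exists s : seq I, forall i j l : I,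
  ~~ [&& i \in s, j \in s & l \in s] -> (0 : Hh P i j l) = 0 /\ trc w i j l = 0.
Proof.
exists [:: i0; j0; l0] => i j l hn; split => //; apply: trc_ne.
apply: contra hn => /eqP [-> -> ->]; by rewrite !inE !eqxx !orbT.
Qed.
Lemma sgl_fin_h (w : Hh P i0 j0 l0) : exists s : seq I, forall i j l : I,
  ~~ [&& i \in s, j \in s & l \in s] -> trh w i j l = 0 /\ (0 : Hc P i j l) = 0.
Proof.
exists [:: i0; j0; l0] => i j l hn; split => //; apply: trh_ne.
apply: contra hn => /eqP [-> -> ->]; by rewrite !inE !eqxx !orbT.
Qed.

Definition sglc (w : Hc P i0 j0 l0) : H := @MkH _ _ _ P (fun _ _ _ => 0) (trc w) (sgl_fin_c w).
Definition sglh (w : Hh P i0 j0 l0) : H := @MkH _ _ _ P (trh w) (fun _ _ _ => 0) (sgl_fin_h w).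

Lemma fm_sglc (z : H) (w : Hc P i0 j0 l0) : fm z (sglc w) = scal HP (Defs.comp (xh z i0 j0 l0) w).
Proof.
set s := undup (supp z ++ [:: i0; j0; l0]).
have hv : vanish s z.
  by apply: (@vanish_sub _ _ _ _ (supp z)); [move=> i hi; rewrite mem_undup mem_cat hi | exact: vanish_supp].
rewrite (form_eq _ (undup_uniq _) hv) (@sum3_single _ _ i0 j0 l0) ?undup_uniq ?mem_undup ?mem_cat ?inE ?eqxx ?orbT //.
  by rewrite /term /= trc_eq (comp0l HC) scal0 addr0.
by move=> i j l ne; rewrite /term /= trc_ne // (comp0l HC) (comp0r HC) scal0 addr0.
Qed.

Lemma fm_sglh (z : H) (w : Hh P i0 j0 l0) : fm z (sglh w) = scal HP (Defs.comp w (xc z i0 j0 l0)).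
Proof.
set s := undup (supp z ++ [:: i0; j0; l0]).
have hv : vanish s z.
  by apply: (@vanish_sub _ _ _ _ (supp z)); [move=> i hi; rewrite mem_undup mem_cat hi | exact: vanish_supp].
rewrite (form_eq _ (undup_uniq _) hv) (@sum3_single _ _ i0 j0 l0) ?undup_uniq ?mem_undup ?mem_cat ?inE ?eqxx ?orbT //.
  by rewrite /term /= trh_eq (comp0r HC) scal0 add0r.
by move=> i j l ne; rewrite /term /= trh_ne // (comp0l HC) (comp0r HC) scal0 addr0.
Qed.

End Single.

Lemma pk0 (U U' W W' : Ob D) : U = U' -> W = W' ->
  pk (0 : Defs.Hom D U W) = pk (0 : Defs.Hom D U' W').
Proof. by move=> -> ->. Qed.

Lemma comp_sumr (U W X : Ob D) (g : Defs.Hom D W X) (T : Type) (s : seq T) (F : T -> Defs.Hom D U W) :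
  Defs.comp g (\sum_(p <- s) F p) = \sum_(p <- s) Defs.comp g (F p).
Proof. elim: s => [|p s IH]; first by rewrite !big_nil (comp0r HC). by rewrite !big_cons (compDr HC) IH. Qed.
Lemma comp_suml (U W X : Ob D) (f : Defs.Hom D U W) (T : Type) (s : seq T) (F : T -> Defs.Hom D W X) :
  Defs.comp (\sum_(p <- s) F p) f = \sum_(p <- s) Defs.comp (F p) f.
Proof. elim: s => [|p s IH]; first by rewrite !big_nil (comp0l HC). by rewrite !big_cons (compDl HC) IH. Qed.

Lemma ND i j l (g : Hh P i j l) : (forall w : Hc P i j l, scal HP (Defs.comp g w) = 0) -> g = 0.
Proof.
move=> hg.
have zero_end : forall l' (a : Hc P i j l'), Defs.comp g a = 0.
  move=> l' a; case: (eqVneq l' l) => [e|ne].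
    by subst l'; rewrite (scalE HP (Defs.comp g a)) hg scale0r.
  exact: (psi_disj HP ne).
case: (classic (exists l', exists w : Hc P i j l', w != 0)) => [ex|nex].
  have [s hs] := psi_dom HP ex.
  rewrite -(compm1 HC g) hs comp_sumr big1 // => -[l' [a b]] _ /=.
  by rewrite (Defs.compA HC) zero_end (comp0l HC).
apply/eqP; apply/negPn/negP => gn0.
have zn0 : TB_h g != 0.
  apply: contra gn0 => /eqP hz; apply/eqP; apply: pk_inj.
  rewrite -(Z3 HC HP g) hz (TB_c0 P HC).
  by apply: pk0; rewrite ?(star_invol P).
have [s hs] := psi_dom HP (ex_intro _ i (ex_intro _ (TB_h g) zn0)).
have [p hp] : exists p : {l' : I & (Hc P l j^* l' * Hh P l j^* l')%type},
    Defs.comp (projT2 p).2 (TB_h g) != 0.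
  apply: NNPP => hn; apply: (negP zn0); apply/eqP.
  rewrite -(comp1m HC (TB_h g)) hs comp_suml big1 // => p' _.
  rewrite -(Defs.compA HC).
  have -> : Defs.comp (projT2 p').2 (TB_h g) = 0.
    by apply/eqP; apply: contra_notT hn => h; exists p'.
  by rewrite (comp0r HC).
case: p hp => l' [a b] /= hb.
case: (eqVneq i l') => [e|ne]; last by rewrite (psi_disj HP ne (Defs.comp b (TB_h g))) eqxx in hb.
subst l'.
have bn0 : b != 0 by apply: contra hb => /eqP ->; rewrite (comp0l HC).
apply: nex; exists l; exists (cHc2 (star_invol P j) (TB_h b)).
apply: contra bn0 => /eqP h0; apply/eqP; apply: pk_inj.
rewrite -(Z3 HC HP b).
have -> : TB_h b = 0.
  apply: pk_inj; rewrite -(pk_cHc2 (star_invol P j)) h0.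
  by apply: pk0; rewrite ?(star_invol P).
by rewrite (TB_c0 P HC); apply: pk0; rewrite ?(star_invol P).
Qed.

Lemma ND' i j l (w : Hc P i j l) : (forall g : Hh P i j l, scal HP (Defs.comp g w) = 0) -> w = 0.
Proof.
move=> hw; apply/eqP; apply/negPn/negP => wn0.
have [s hs] := psi_dom HP (ex_intro _ l (ex_intro _ w wn0)).
apply: (negP wn0); apply/eqP.
rewrite -(comp1m HC w) hs comp_suml big1 // => -[l' [a b]] _ /=; rewrite -(Defs.compA HC).
case: (eqVneq l l') => [e|ne].
  by subst l'; rewrite (scalE HP (Defs.comp b w)) hw scale0r (comp0r HC).
by rewrite (psi_disj HP ne (Defs.comp b w)) (comp0r HC).
Qed.

Lemma scalB i (f f' : Defs.Hom D (V i) (V i)) : scal HP (f - f') = scal HP f - scal HP f'.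
Proof. by apply: scal_uniq; rewrite {1}(scalE HP f) {1}(scalE HP f') scalerBl. Qed.
Lemma compBl (U W X : Ob D) (g g' : Defs.Hom D W X) (f : Defs.Hom D U W) :
  Defs.comp (g - g') f = Defs.comp g f - Defs.comp g' f.
Proof. by have := compDl HC (g - g') g' f; rewrite subrK => ->; rewrite addrK. Qed.
Lemma compBr (U W X : Ob D) (g : Defs.Hom D W X) (f f' : Defs.Hom D U W) :
  Defs.comp g (f - f') = Defs.comp g f - Defs.comp g f'.
Proof. by have := compDr HC g (f - f') f'; rewrite subrK => ->; rewrite addrK. Qed.

Lemma form_nd (z z' : H) : (forall y, fm z y = fm z' y) -> z = z'.
Proof.
move=> hz; apply: Hsp_ext => i j l; apply/eqP; rewrite -subr_eq0; apply/eqP.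
  apply: ND => w; have := hz (sglc w); rewrite !fm_sglc => e.
  by rewrite compBl scalB e subrr.
apply: ND' => g; have := hz (sglh g); rewrite !fm_sglh => e.
by rewrite compBr scalB e subrr.
Qed.

Lemma sglc_in i j l (w : Hc P i j l) : in_Hc i j l (sglc w).
Proof. by split => // a b c ne; rewrite /= trc_ne. Qed.
Lemma sglh_in i j l (w : Hh P i j l) : in_Hh i j l (sglh w).
Proof. by split => // a b c ne; rewrite /= trh_ne. Qed.

Lemma grad_A (x : H) i j l :
  (in_Hh i j l x -> in_Hc i^* l j (A x)) /\ (in_Hc i j l x -> in_Hh i^* l j (A x)).
Proof.
split=> -[h1 h2]; split=> a b c.
- by rewrite /= /ahA h2 (TA_c0 P HC) cHh1_0.
- move=> ne; rewrite /= /acA h1 ?(TA_h0 P HC) ?cHc1_0 //.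
  by apply: contra ne => /eqP [ea ec eb]; rewrite -ea (star_invol P) ec eb.
- move=> ne; rewrite /= /ahA h2 ?(TA_c0 P HC) ?cHh1_0 //.
  by apply: contra ne => /eqP [ea ec eb]; rewrite -ea (star_invol P) ec eb.
- by rewrite /= /acA h1 (TA_h0 P HC) cHc1_0.
Qed.

Lemma grad_B (x : H) i j l :
  (in_Hh i j l x -> in_Hc l j^* i (B x)) /\ (in_Hc i j l x -> in_Hh l j^* i (B x)).
Proof.
split=> -[h1 h2]; split=> a b c.
- by rewrite /= /ahB h2 (TB_c0 P HC) cHh2_0.
- move=> ne; rewrite /= /acB h1 ?(TB_h0 P HC) ?cHc2_0 //.
  by apply: contra ne => /eqP [ec eb ea]; rewrite -eb (star_invol P) ec ea.
- move=> ne; rewrite /= /ahB h2 ?(TB_c0 P HC) ?cHh2_0 //.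
  by apply: contra ne => /eqP [ec eb ea]; rewrite -eb (star_invol P) ec ea.
- by rewrite /= /acB h1 (TB_h0 P HC) cHc2_0.
Qed.

Lemma fm_zero (x y : H) : (forall i j l, term HP x y i j l = 0) -> fm x y = 0.
Proof.
move=> ht.
have hv : vanish (undup (supp x)) x.
  by apply: (@vanish_sub _ _ _ _ (supp x)); [move=> i; rewrite mem_undup | exact: vanish_supp].
rewrite (form_eq _ (undup_uniq _) hv); apply: big1 => i _; apply: big1 => j _; apply: big1 => l _.
by [].
Qed.

Lemma fm_hh (x y : H) i j l i' j' l' : in_Hh i j l x -> in_Hh i' j' l' y -> fm x y = 0.
Proof.
move=> [_ hx] [_ hy]; apply: fm_zero => a b c.
by rewrite /term hx hy !(comp0r HC) scal0 addr0.
Qed.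
Lemma fm_cc (x y : H) i j l i' j' l' : in_Hc i j l x -> in_Hc i' j' l' y -> fm x y = 0.
Proof.
move=> [hx _] [hy _]; apply: fm_zero => a b c.
by rewrite /term hx hy !(comp0l HC) scal0 addr0.
Qed.
Lemma fm_hc (x y : H) i j l i' j' l' : in_Hh i j l x -> in_Hc i' j' l' y ->
  (i, j, l) != (i', j', l') -> fm x y = 0.
Proof.
move=> [hx1 hx2] [hy1 hy2] ne; apply: fm_zero => a b c.
rewrite /term hy1 (comp0l HC) scal0 addr0.
case: (eqVneq (a, b, c) (i, j, l)) => [[-> -> ->]|ne'].
  by rewrite hy2 // (comp0r HC) scal0.
by rewrite hx1 // (comp0l HC) scal0.
Qed.
Lemma fm_ch (x y : H) i j l i' j' l' : in_Hc i j l x -> in_Hh i' j' l' y ->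
  (i, j, l) != (i', j', l') -> fm x y = 0.
Proof. by move=> hx hy ne; rewrite form_sym (fm_hc hy hx) // eq_sym. Qed.

Section Trans.
Variables (As Bs : H -> H).
Hypothesis hA : is_transpose HP A As.
Hypothesis hB : is_transpose HP B Bs.

Lemma grad_As (y : H) p q r :
  (in_Hc p q r y -> in_Hh p^* r q (As y)) /\ (in_Hh p q r y -> in_Hc p^* r q (As y)).
Proof.
split=> hy; split=> a b c.
- move=> ne; apply: ND => w; rewrite -fm_sglc form_sym -hA.
  apply: (fm_hc ((grad_A _ _ _ _).2 (sglc_in w)) hy).
  by apply: contra ne => /eqP [ea ec eb]; rewrite -ea (star_invol P) ec eb.
- apply: ND' => g; rewrite -fm_sglh form_sym -hA.
  exact: (fm_cc ((grad_A _ _ _ _).1 (sglh_in g)) hy).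
- apply: ND => w; rewrite -fm_sglc form_sym -hA.
  exact: (fm_hh ((grad_A _ _ _ _).2 (sglc_in w)) hy).
- move=> ne; apply: ND' => g; rewrite -fm_sglh form_sym -hA.
  apply: (fm_ch ((grad_A _ _ _ _).1 (sglh_in g)) hy).
  by apply: contra ne => /eqP [ea ec eb]; rewrite -ea (star_invol P) ec eb.
Qed.

Lemma grad_Bs (y : H) p q r :
  (in_Hc p q r y -> in_Hh r q^* p (Bs y)) /\ (in_Hh p q r y -> in_Hc r q^* p (Bs y)).
Proof.
split=> hy; split=> a b c.
- move=> ne; apply: ND => w; rewrite -fm_sglc form_sym -hB.
  apply: (fm_hc ((grad_B _ _ _ _).2 (sglc_in w)) hy).
  by apply: contra ne => /eqP [ec eb ea]; rewrite -eb (star_invol P) ec ea.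
- apply: ND' => g; rewrite -fm_sglh form_sym -hB.
  exact: (fm_cc ((grad_B _ _ _ _).1 (sglh_in g)) hy).
- apply: ND => w; rewrite -fm_sglc form_sym -hB.
  exact: (fm_hh ((grad_B _ _ _ _).2 (sglc_in w)) hy).
- move=> ne; apply: ND' => g; rewrite -fm_sglh form_sym -hB.
  apply: (fm_ch ((grad_B _ _ _ _).1 (sglh_in g)) hy).
  by apply: contra ne => /eqP [ec eb ea]; rewrite -eb (star_invol P) ec ea.
Qed.

End Trans.

End HspM.



Section Alg.
Variables (X : Type) (a b l r c li ri ci : X -> X).
Hypotheses (aa : forall x, a (a x) = x) (bb : forall x, b (b x) = x).
Hypotheses (lli : forall x, l (li x) = x) (lil : forall x, li (l x) = x).
Hypotheses (rri : forall x, r (ri x) = x) (rir : forall x, ri (r x) = x).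
Hypotheses (cci : forall x, c (ci x) = x) (cic : forall x, ci (c x) = x).
Hypotheses (al : forall x, a (l x) = li (a x)) (ali : forall x, a (li x) = l (a x)).
Hypotheses (br : forall x, b (r x) = ri (b x)) (bri : forall x, b (ri x) = r (b x)).
Hypotheses (ac : forall x, a (c x) = ci (a x)) (aci : forall x, a (ci x) = c (a x)).
Hypotheses (bc : forall x, b (c x) = ci (b x)) (bci : forall x, b (ci x) = c (b x)).
Hypotheses (ar : forall x, a (r x) = li (r (ci (a x)))).
Hypotheses (bl : forall x, b (l x) = ri (l (c (b x)))).
Hypothesis (hc : forall x, c x = a (b (a (b (a (b x)))))).

Lemma ari x : a (ri x) = c (ri (l (a x))).
Proof.
have inj : forall u v, a (r (a u)) = a (r (a v)) -> u = v.
  move=> u v /(f_equal a); rewrite !aa => /(f_equal ri); rewrite !rir => /(f_equal a); by rewrite !aa.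
apply: inj; rewrite aa rri.
by rewrite ar aa cic rri lil.
Qed.

Lemma bli x : b (li x) = ci (li (r (b x))).
Proof.
have inj : forall u v, b (l (b u)) = b (l (b v)) -> u = v.
  move=> u v /(f_equal b); rewrite !bb => /(f_equal li); rewrite !lil => /(f_equal b); by rewrite !bb.
apply: inj; rewrite bb lli.
by rewrite bl bb cci lli rir.
Qed.

Lemma lc x : l (c x) = c (l x).
Proof.
have key : forall y, c (l y) = c (c (l (ci y))).
  move=> y; rewrite [c (l y)]hc.
  rewrite bl ari al ac lli bc bri bci aci ar ac.
  rewrite bc bli br rri !bci !aci ali !ac -hc cic //.
have := key (c x); rewrite cic => /(f_equal ci); by rewrite !cic.
Qed.

Lemma rc x : r (c x) = c (r x).
Proof.
have key : forall y, c (r y) = c (c (r (ci y))).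
  move=> y; rewrite [c (r y)]hc.
  by rewrite br ari bc bri bl rri aci al ac bc bli bci !aci ali ar lli ac -hc cic.
have := key (c x); rewrite cic => /(f_equal ci); by rewrite !cic.
Qed.

Lemma hci x : ci x = b (a (b (a (b (a x))))).
Proof.
have e : c (b (a (b (a (b (a x)))))) = x by rewrite hc bb aa bb aa bb aa.
by rewrite -{1}e cic.
Qed.

Lemma csym x : r (b (l (a (r (b (l (a (r (b (l (a x))))))))))) = c x.
Proof.
rewrite !bl !rri.
rewrite [a (l (c (b (a x))))]al bli ac bci cci lli.
rewrite ar ac bli br rri !bci cci lli.
by rewrite -hci cci.
Qed.

End Alg.



Section Core.
Variables (k : fieldType) (D : smcat_data k) (I : choiceType) (P : psi_data D I) (HP : is_psi_system P).
Local Notation H := (Hsp P).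
Local Notation fm := (Defs.form HP).
Variables (A B As Bs : H -> H).
Hypotheses (aa : forall x, A (A x) = x) (bb : forall x, B (B x) = x).
Hypothesis sym : forall x y, fm x y = fm y x.
Hypothesis nd : forall z z', (forall y, fm z y = fm z' y) -> z = z'.
Hypothesis Q : forall x y, fm (A (B (A x))) y = fm x (B (A (B y))).
Hypotheses (hA : forall x y, fm (A x) y = fm x (As y)) (hB : forall x y, fm (B x) y = fm x (Bs y)).
Hypothesis gA : forall x i j l,
  (in_Hh i j l x -> in_Hc (star P i) l j (A x)) /\ (in_Hc i j l x -> in_Hh (star P i) l j (A x)).
Hypothesis gB : forall x i j l,
  (in_Hh i j l x -> in_Hc l (star P j) i (B x)) /\ (in_Hc i j l x -> in_Hh l (star P j) i (B x)).
Hypothesis gAs : forall y p q r,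
  (in_Hc p q r y -> in_Hh (star P p) r q (As y)) /\ (in_Hh p q r y -> in_Hc (star P p) r q (As y)).
Hypothesis gBs : forall y p q r,
  (in_Hc p q r y -> in_Hh r (star P q) p (Bs y)) /\ (in_Hh p q r y -> in_Hc r (star P q) p (Bs y)).

Lemma As2 y : As (As y) = y.
Proof. by apply: nd => z; rewrite [LHS]sym -hA -hA aa sym. Qed.
Lemma Bs2 y : Bs (Bs y) = y.
Proof. by apply: nd => z; rewrite [LHS]sym -hB -hB bb sym. Qed.

Lemma ARA y : A (Bs (B (A y))) = A (As (Bs (B (B (A (B (A (B (A y))))))))).
Proof.
congr A; apply: nd => z.
rewrite [LHS]sym -hB [RHS]sym -hA -hB bb.
by rewrite [RHS]sym Q bb aa sym.
Qed.

Lemma BLB y : B (As (A (B y))) = B (Bs (As (A (A (B (A (B (A (B y))))))))).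
Proof.
congr B; apply: nd => z.
rewrite [LHS]sym -hA [RHS]sym -hB -hA aa.
by rewrite -Q aa bb.
Qed.

Theorem core :
  let L := As \o A in
  let R := Bs \o B in
  let C := (A \o B) \o (A \o B) \o (A \o B) in
  [/\ is_transpose HP L L, is_transpose HP R R & is_transpose HP C C] /\
  [/\ grading_preserving L, grading_preserving R & grading_preserving C] /\
  exists Linv Rinv Cinv : Hsp P -> Hsp P,
    [/\ cancel L Linv /\ cancel Linv L, cancel R Rinv /\ cancel Rinv R
      & cancel C Cinv /\ cancel Cinv C] /\
    (forall x, A (C (A x)) = Cinv x) /\ (forall x, B (C (B x)) = Cinv x) /\
    (forall x, L (C (Linv x)) = C x) /\ (forall x, R (C (Rinv x)) = C x) /\
    (forall x, A (L (A x)) = Linv x) /\ (forall x, B (R (B x)) = Rinv x) /\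
    (forall x, A (R (A x)) = Linv (R (Cinv x))) /\
    (forall x, B (L (B x)) = Rinv (L (C x))).
Proof.
move=> L R C.
pose Linv := fun x => A (As x).
pose Rinv := fun x => B (Bs x).
pose Cinv := fun x => B (A (B (A (B (A x))))).
have eL : forall x, L x = As (A x) by [].
have eR : forall x, R x = Bs (B x) by [].
have eC : forall x, C x = A (B (A (B (A (B x))))) by [].
have lli : forall x, L (Linv x) = x by move=> x; rewrite eL /Linv aa As2.
have lil : forall x, Linv (L x) = x by move=> x; rewrite eL /Linv As2 aa.
have rri : forall x, R (Rinv x) = x by move=> x; rewrite eR /Rinv bb Bs2.
have rir : forall x, Rinv (R x) = x by move=> x; rewrite eR /Rinv Bs2 bb.
have cci : forall x, C (Cinv x) = x by move=> x; rewrite eC /Cinv !(aa, bb).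
have cic : forall x, Cinv (C x) = x by move=> x; rewrite eC /Cinv !(aa, bb).
have al : forall x, A (L x) = Linv (A x) by [].
have ali : forall x, A (Linv x) = L (A x) by move=> x; rewrite eL /Linv !aa.
have br : forall x, B (R x) = Rinv (B x) by [].
have bri : forall x, B (Rinv x) = R (B x) by move=> x; rewrite eR /Rinv !bb.
have ac : forall x, A (C x) = Cinv (A x) by move=> x; rewrite eC /Cinv !aa.
have aci : forall x, A (Cinv x) = C (A x) by [].
have bc : forall x, B (C x) = Cinv (B x) by [].
have bci : forall x, B (Cinv x) = C (B x) by move=> x; rewrite eC /Cinv !bb.
have ar : forall x, A (R x) = Linv (R (Cinv (A x))).
  by move=> x; rewrite -{1}(aa x) eR ARA.
have bl : forall x, B (L x) = Rinv (L (C (B x))).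
  by move=> x; rewrite -{1}(bb x) eL BLB.
have lcx : forall x, L (C x) = C (L x).
  by move=> x; apply: (@lc _ A B L R C Linv Rinv Cinv).
have rcx : forall x, R (C x) = C (R x).
  by move=> x; apply: (@rc _ A B L R C Linv Rinv Cinv).
have csx : forall x, R (B (L (A (R (B (L (A (R (B (L (A x))))))))))) = C x.
  by move=> x; apply: (@csym _ A B L R C Linv Rinv Cinv).
split; [split|split; [split|]].
- by move=> x y; rewrite !eL [LHS]sym -hA sym hA.
- by move=> x y; rewrite !eR [LHS]sym -hB sym hB.
- move=> x y; rewrite eC hA hB hA hB hA hB -csx !eR !eL !(aa, bb).
  by [].
- move=> i j l x; split=> h.
    by have := (gAs (A x) (star P i) l j).1 ((gA x i j l).1 h); rewrite (star_invol P).
  by have := (gAs (A x) (star P i) l j).2 ((gA x i j l).2 h); rewrite (star_invol P).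
- move=> i j l x; split=> h.
    by have := (gBs (B x) l (star P j) i).1 ((gB x i j l).1 h); rewrite (star_invol P).
  by have := (gBs (B x) l (star P j) i).2 ((gB x i j l).2 h); rewrite (star_invol P).
- move=> i j l x; split=> h.
    have h1 := (gB _ _ _ _).1 h; have h2 := (gA _ _ _ _).2 h1; have h3 := (gB _ _ _ _).1 h2.
    have h4 := (gA _ _ _ _).2 h3; have h5 := (gB _ _ _ _).1 h4; have h6 := (gA _ _ _ _).2 h5.
    by rewrite !(star_invol P) in h6.
  have h1 := (gB _ _ _ _).2 h; have h2 := (gA _ _ _ _).1 h1; have h3 := (gB _ _ _ _).2 h2.
  have h4 := (gA _ _ _ _).1 h3; have h5 := (gB _ _ _ _).2 h4; have h6 := (gA _ _ _ _).1 h5.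
  by rewrite !(star_invol P) in h6.
exists Linv, Rinv, Cinv.
split; first by split; split.
split; first by move=> x; rewrite eC /Cinv !(aa, bb).
split; first by move=> x; rewrite eC /Cinv !(aa, bb).
split; first by move=> x; rewrite lcx lli.
split; first by move=> x; rewrite rcx rri.
split; first by move=> x; rewrite eL /Linv aa.
split; first by move=> x; rewrite eR /Rinv bb.
split; first by move=> x; rewrite ar aa.
by move=> x; rewrite bl bb.
Qed.

End Core.


Theorem lemma5p1 (k : fieldType) (D : smcat_data k) (HC : smcat_axioms D)
  (I : choiceType) (P : psi_data D I) (HP : is_psi_system P)
  (As Bs : Hsp P -> Hsp P) :
  is_transpose HP (opA HC) As -> is_transpose HP (opB HC) Bs ->
  let A := opA HC in
  let B := opB HC in
  let L := As \o A in
  let R := Bs \o B in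
  let C := (A \o B) \o (A \o B) \o (A \o B) in
  [/\ is_transpose HP L L, is_transpose HP R R & is_transpose HP C C] /\
  [/\ grading_preserving L, grading_preserving R & grading_preserving C] /\
  exists Linv Rinv Cinv : Hsp P -> Hsp P,
    [/\ cancel L Linv /\ cancel Linv L, cancel R Rinv /\ cancel Rinv R
      & cancel C Cinv /\ cancel Cinv C] /\
    (forall x, A (C (A x)) = Cinv x) /\ (forall x, B (C (B x)) = Cinv x) /\
    (forall x, L (C (Linv x)) = C x) /\ (forall x, R (C (Rinv x)) = C x) /\
    (forall x, A (L (A x)) = Linv x) /\ (forall x, B (R (B x)) = Rinv x) /\
    (forall x, A (R (A x)) = Linv (R (Cinv x))) /\
    (forall x, B (L (B x)) = Rinv (L (C x))).
Proof.
move=> hA hB.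
apply: (@core k D I P HP (opA HC) (opB HC) As Bs).
- exact: A2.
- exact: B2.
- exact: form_sym.
- by move=> z z' h; apply: form_nd.
- exact: Qid.
- exact: hA.
- exact: hB.
- exact: grad_A.
- exact: grad_B.
- exact: grad_As.
- exact: grad_Bs.
Qed.
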